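(* Let $u$ be a sufficiently regular function and $H=(H^{\alpha\beta})$ a sufficiently regular symmetric 2-tensor field on $\mathcal{K}_{[s_0,s_1]}$. Let $I$ be a multi-index with values in $\{0,1,2\}$, $J$ a multi-index with values in $\{1,2\}$, $p=|I|+|J|$, $k=|J|$. Then, with a constant $C$ determined by $I,J$, $$\big|[\partial^IL^J,\underline{H}^{00}\partial_t\partial_t]u\big|\le C\!\!\!\sum_{|I_1|+|I_2|\le|I|,\ |J_1|+|J_2|\le|J|\atop |I_2|+|J_2|\ge1}\!\!\!|\partial^{I_2}L^{J_2}\underline{H}^{00}|\,|\partial_t\partial_t\partial^{I_1}L^{J_1}u|+C|\underline{H}^{00}|\sum_{0\le|J'|<|J|}|\partial_t\partial_t\partial^IL^{J'}u|$$ $$+Ct^{-1}\sum_{p_1+p_2\le p,\ p_1<p\atop k_1+k_2\le k}|\underline{H}^{00}|_{p_2,k_2}|\partial u|_{p_1+1,k_1+1}+Ct^{-1}|\underline{H}^{00}|\,|\partial u|_{p,k},$$ where $[\partial^IL^J,\underline{H}^{00}\partial_t\partial_t]u:=\partial^IL^J(\underline{H}^{00}\partial_t\partial_tu)-\underline{H}^{00}\partial_t\partial_t\partial^IL^Ju$.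
   Context: Coordinates $(t,x)=(x^0,x^1,x^2)$, $r=|x|$, $\partial_0=\partial_t$, summation over repeated indices. $\mathcal{K}_{[s_0,s_1]}=\{(t,x): t>r+1,\ s_0^2\le t^2-r^2\le s_1^2\}$. Boosts $L_a=x^a\partial_t+t\partial_a$; $\partial^I=\partial_{i_1}\cdots\partial_{i_m}$, $L^J=L_{j_1}\cdots L_{j_n}$. $\underline{H}^{00}:=H^{00}-2(x^a/t)H^{a0}+(x^ax^b/t^2)H^{ab}$. For a function $w$: $|w|_{p,k}:=\max|Z^Kw|$ over all operators $Z^K$ that are compositions, in any order, of $i$ partial derivatives $\partial_\alpha$ and $j$ boosts $L_a$ with $i+j\le p$, $j\le k$; $|\partial w|_{p,k}:=\max_\alpha|\partial_\alpha w|_{p,k}$. *)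

(* Defs.v *)
From Stdlib Require Import Reals List.
From Coquelicot Require Import Coquelicot.
Import ListNotations.
Open Scope R_scope.

(* Functions of (t, x^1, x^2). *)
Definition fn := R -> R -> R -> R.

Inductive idx3 := D0 | D1 | D2.
Inductive idx2 := B1 | B2.

Definition all_idx3 : list idx3 := [D0; D1; D2].
Definition all_idx2 : list idx2 := [B1; B2].

Definition pd (a : idx3) (w : fn) : fn :=
  match a with
  | D0 => fun t x y => Derive (fun s => w s x y) t
  | D1 => fun t x y => Derive (fun s => w t s y) x
  | D2 => fun t x y => Derive (fun s => w t x s) y
  end.

Definition idx_of (b : idx2) : idx3 := match b with B1 => D1 | B2 => D2 end.

Definition coord (b : idx2) (t x y : R) : R := match b with B1 => x | B2 => y end.

Definition boost (b : idx2) (w : fn) : fn :=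
  fun t x y => coord b t x y * pd D0 w t x y + t * pd (idx_of b) w t x y.

Definition pdI (I : list idx3) (w : fn) : fn := fold_right pd w I.
Definition LJ (J : list idx2) (w : fn) : fn := fold_right boost w J.

Definition dtt (w : fn) : fn := pd D0 (pd D0 w).

(* general operators Z^K : compositions of ∂_α and L_a in any order *)
Inductive zop := Zd (a : idx3) | ZL (b : idx2).
Definition apply_zop (z : zop) (w : fn) : fn :=
  match z with Zd a => pd a w | ZL b => boost b w end.
Definition applyZ (K : list zop) (w : fn) : fn := fold_right apply_zop w K.
Definition isL (z : zop) : bool := match z with Zd _ => false | ZL _ => true end.
Definition numL (K : list zop) : nat := length (filter isL K).
Definition all_zop : list zop := map Zd all_idx3 ++ map ZL all_idx2.

Fixpoint lists_len {A : Type} (xs : list A) (n : nat) : list (list A) :=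
  match n with
  | O => [[]]
  | S m => flat_map (fun l => map (fun a => a :: l) xs) (lists_len xs m)
  end.
Definition lists_upto {A : Type} (xs : list A) (n : nat) : list (list A) :=
  flat_map (lists_len xs) (seq 0 (S n)).

Definition sumR (l : list R) : R := fold_right Rplus 0 l.

(* |w|_{p,k} at a point: max |Z^K w| over Z^K with i+j <= p, j <= k *)
Definition normpk (p k : nat) (w : fn) (t x y : R) : R :=
  fold_right Rmax 0
    (map (fun K => Rabs (applyZ K w t x y))
       (filter (fun K => Nat.leb (numL K) k) (lists_upto all_zop p))).

Definition normd (p k : nat) (w : fn) (t x y : R) : R :=
  Rmax (normpk p k (pd D0 w) t x y)
       (Rmax (normpk p k (pd D1 w) t x y) (normpk p k (pd D2 w) t x y)).

Definition Hbar00 (H : idx3 -> idx3 -> fn) : fn :=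
  fun t x y =>
    H D0 D0 t x y
    - 2 * sumR (map (fun a => coord a t x y / t * H (idx_of a) D0 t x y) all_idx2)
    + sumR (flat_map (fun a => map (fun b =>
          coord a t x y * coord b t x y / (t ^ 2) * H (idx_of a) (idx_of b) t x y)
          all_idx2) all_idx2).

Definition rad (x y : R) : R := sqrt (x ^ 2 + y ^ 2).
Definition inK (s0 s1 t x y : R) : Prop :=
  t > rad x y + 1 /\ s0 ^ 2 <= t ^ 2 - (rad x y) ^ 2 /\ t ^ 2 - (rad x y) ^ 2 <= s1 ^ 2.

Definition open3 (U : R -> R -> R -> Prop) : Prop :=
  forall t x y, U t x y -> exists eps, 0 < eps /\
    forall t' x' y', Rabs (t' - t) < eps -> Rabs (x' - x) < eps -> Rabs (y' - y) < eps ->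
      U t' x' y'.

Definition cont3_at (g : fn) (t x y : R) : Prop :=
  forall e, 0 < e -> exists d, 0 < d /\
    forall t' x' y', Rabs (t' - t) < d -> Rabs (x' - x) < d -> Rabs (y' - y) < d ->
      Rabs (g t' x' y' - g t x y) < e.

Definition smooth_on (U : R -> R -> R -> Prop) (w : fn) : Prop :=
  forall (l : list idx3) t x y, U t x y ->
    let g := pdI l w in
    cont3_at g t x y /\
    ex_derive (fun s => g s x y) t /\
    ex_derive (fun s => g t s y) x /\
    ex_derive (fun s => g t x s) y.

Definition comm (I : list idx3) (J : list idx2) (Hb u : fn) : fn :=
  fun t x y =>
    pdI I (LJ J (fun t' x' y' => Hb t' x' y' * dtt u t' x' y')) t x y
    - Hb t x y * dtt (pdI I (LJ J u)) t x y.

Definition rhs1 (I : list idx3) (J : list idx2) (Hb u : fn) (t x y : R) : R :=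
  let nI := length I in let nJ := length J in
  sumR (map (fun q : list idx3 * list idx3 * list idx2 * list idx2 =>
      let '(I1, I2, J1, J2) := q in
      Rabs (pdI I2 (LJ J2 Hb) t x y) * Rabs (dtt (pdI I1 (LJ J1 u)) t x y))
    (filter (fun q : list idx3 * list idx3 * list idx2 * list idx2 =>
        let '(I1, I2, J1, J2) := q in
        Nat.leb (length I1 + length I2) nI && Nat.leb (length J1 + length J2) nJ
        && Nat.leb 1 (length I2 + length J2))%bool
      (list_prod (list_prod (list_prod (lists_upto all_idx3 nI) (lists_upto all_idx3 nI))
                  (lists_upto all_idx2 nJ)) (lists_upto all_idx2 nJ)))).

Definition rhs2 (I : list idx3) (J : list idx2) (u : fn) (t x y : R) : R :=
  sumR (map (fun J' => Rabs (dtt (pdI I (LJ J' u)) t x y))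
    (filter (fun J' => Nat.ltb (length J') (length J)) (lists_upto all_idx2 (length J)))).

Definition rhs3 (p k : nat) (Hb u : fn) (t x y : R) : R :=
  sumR (flat_map (fun p1 => flat_map (fun p2 => flat_map (fun k1 => map (fun k2 =>
      normpk p2 k2 Hb t x y * normd (p1 + 1) (k1 + 1) u t x y)
      (filter (fun k2 => Nat.leb (k1 + k2) k) (seq 0 (S k))))
      (seq 0 (S k)))
      (filter (fun p2 => Nat.leb (p1 + p2) p) (seq 0 (S p))))
    (seq 0 p)).

(* Main.v *)
Require Import Defs.
From Stdlib Require Import Reals List.
From Coquelicot Require Import Coquelicot.
From Stdlib Require Import Lra Lia.
Import ListNotations.
Open Scope R_scope.

Definition eqV (V : R -> R -> R -> Prop) (f g : fn) :=
  forall t x y, V t x y -> f t x y = g t x y.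
Definition fplus (f g : fn) : fn := fun t x y => f t x y + g t x y.
Definition fmult (f g : fn) : fn := fun t x y => f t x y * g t x y.
Definition fconst (c : R) : fn := fun _ _ _ => c.
Definition fscal (c : R) (f : fn) : fn := fun t x y => c * f t x y.
Definition fminus (f g : fn) : fn := fplus f (fscal (-1) g).
Definition ft : fn := fun t _ _ => t.
Definition finv : fn := fun t _ _ => / t.

Lemma locally_of (t eps : R) (P : R -> Prop) :
  0 < eps -> (forall s, Rabs (s - t) < eps -> P s) -> locally t P.
Proof. intros he H. exists (mkposreal eps he). intros s Hs. apply H. exact Hs. Qed.

Lemma eqV_pd V a f g : open3 V -> eqV V f g -> eqV V (pd a f) (pd a g).
Proof.
  intros HV He t x y Hp. destruct (HV t x y Hp) as [eps [Heps Hn]].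
  destruct a; simpl; apply Derive_ext_loc; apply (locally_of _ eps); auto;
  intros s Hs; apply He; apply Hn; try rewrite Rminus_diag, Rabs_R0; auto.
Qed.

Lemma eqV_refl V f : eqV V f f.
Proof. intros t x y _; reflexivity. Qed.
Lemma eqV_sym V f g : eqV V f g -> eqV V g f.
Proof. intros H t x y h; symmetry; auto. Qed.
Lemma eqV_trans V f g h : eqV V f g -> eqV V g h -> eqV V f h.
Proof. intros H1 H2 t x y hh; rewrite H1; auto. Qed.

Lemma eqV_pdI V l f g : open3 V -> eqV V f g -> eqV V (pdI l f) (pdI l g).
Proof. intros HV He; induction l; simpl; auto. apply eqV_pd; auto. Qed.

Lemma eqV_boost V b f g : open3 V -> eqV V f g -> eqV V (boost b f) (boost b g).
Proof.
  intros HV He t x y h; unfold boost.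
  rewrite (eqV_pd V D0 f g HV He t x y h), (eqV_pd V (idx_of b) f g HV He t x y h); auto.
Qed.

Lemma eqV_plus V f1 f2 g1 g2 : eqV V f1 g1 -> eqV V f2 g2 -> eqV V (fplus f1 f2) (fplus g1 g2).
Proof. intros H1 H2 t x y h; unfold fplus; rewrite H1, H2; auto. Qed.
Lemma eqV_mult V f1 f2 g1 g2 : eqV V f1 g1 -> eqV V f2 g2 -> eqV V (fmult f1 f2) (fmult g1 g2).
Proof. intros H1 H2 t x y h; unfold fmult; rewrite H1, H2; auto. Qed.
Lemma eqV_scal V c f g : eqV V f g -> eqV V (fscal c f) (fscal c g).
Proof. intros H1 t x y h; unfold fscal; rewrite H1; auto. Qed.

Lemma cont3_const c t x y : cont3_at (fconst c) t x y.
Proof. intros e he; exists 1; split; [lra|]; intros; unfold fconst; rewrite Rminus_diag, Rabs_R0; auto. Qed.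
Lemma cont3_t t x y : cont3_at ft t x y.
Proof. intros e he; exists e; split; auto. Qed.
Lemma cont3_coord b t x y : cont3_at (coord b) t x y.
Proof. intros e he; exists e; split; auto; destruct b; simpl; auto. Qed.

Lemma cont3_plus f g t x y : cont3_at f t x y -> cont3_at g t x y -> cont3_at (fplus f g) t x y.
Proof.
  intros Hf Hg e he.
  destruct (Hf (e/2)) as [d1 [h1 H1]]; [lra|].
  destruct (Hg (e/2)) as [d2 [h2 H2]]; [lra|].
  exists (Rmin d1 d2); split; [apply Rmin_glb_lt; auto|].
  intros t' x' y' a b c.
  assert (Hm1 := Rmin_l d1 d2). assert (Hm2 := Rmin_r d1 d2).
  specialize (H1 t' x' y' ltac:(lra) ltac:(lra) ltac:(lra)).
  specialize (H2 t' x' y' ltac:(lra) ltac:(lra) ltac:(lra)).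
  unfold fplus.
  replace (f t' x' y' + g t' x' y' - (f t x y + g t x y)) with
    ((f t' x' y' - f t x y) + (g t' x' y' - g t x y)) by ring.
  eapply Rle_lt_trans; [apply Rabs_triang|]. lra.
Qed.

Lemma cont3_mult f g t x y : cont3_at f t x y -> cont3_at g t x y -> cont3_at (fmult f g) t x y.
Proof.
  intros Hf Hg e he.
  set (A := Rabs (f t x y)). set (B := Rabs (g t x y)).
  assert (hA : 0 <= A) by apply Rabs_pos. assert (hB : 0 <= B) by apply Rabs_pos.
  assert (he1 : 0 < e / (2 * (B + 1))) by (apply Rdiv_lt_0_compat; lra).
  assert (he2 : 0 < e / (2 * (A + 1))) by (apply Rdiv_lt_0_compat; lra).
  destruct (Hf (e / (2 * (B + 1)))) as [d1 [h1 H1]]; auto.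
  destruct (Hg (Rmin 1 (e / (2 * (A + 1))))) as [d2 [h2 H2]].
  { apply Rmin_glb_lt; lra. }
  exists (Rmin d1 d2); split; [apply Rmin_glb_lt; auto|].
  intros t' x' y' a b c.
  assert (Hm1 := Rmin_l d1 d2). assert (Hm2 := Rmin_r d1 d2).
  specialize (H1 t' x' y' ltac:(lra) ltac:(lra) ltac:(lra)).
  specialize (H2 t' x' y' ltac:(lra) ltac:(lra) ltac:(lra)).
  assert (Hn1 := Rmin_l 1 (e / (2 * (A + 1)))). assert (Hn2 := Rmin_r 1 (e / (2 * (A + 1)))).
  unfold fmult.
  replace (f t' x' y' * g t' x' y' - f t x y * g t x y) with
    ((f t' x' y' - f t x y) * g t' x' y' + f t x y * (g t' x' y' - g t x y)) by ring.
  eapply Rle_lt_trans; [apply Rabs_triang|]. rewrite !Rabs_mult.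
  assert (Hg' : Rabs (g t' x' y') <= B + 1).
  { replace (g t' x' y') with (g t x y + (g t' x' y' - g t x y)) by ring.
    eapply Rle_trans; [apply Rabs_triang|]. fold B. lra. }
  assert (T1 : Rabs (f t' x' y' - f t x y) * Rabs (g t' x' y') <= e / (2 * (B + 1)) * (B + 1)).
  { apply Rmult_le_compat; try apply Rabs_pos; lra. }
  assert (T2 : A * Rabs (g t' x' y' - g t x y) <= (A + 1) * (e / (2 * (A + 1)))).
  { apply Rmult_le_compat; try apply Rabs_pos; lra. }
  assert (E1 : e / (2 * (B + 1)) * (B + 1) = e / 2) by (field; lra).
  assert (E2 : (A + 1) * (e / (2 * (A + 1))) = e / 2) by (field; lra).
  assert (T3 : Rabs (f t' x' y' - f t x y) * Rabs (g t' x' y') < e / 2).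
  { assert (Rabs (f t' x' y' - f t x y) * Rabs (g t' x' y') < e / (2 * (B + 1)) * (B + 1)); [|lra].
    apply Rle_lt_trans with (Rabs (f t' x' y' - f t x y) * (B + 1)).
    - apply Rmult_le_compat_l; [apply Rabs_pos|lra].
    - apply Rmult_lt_compat_r; lra. }
  fold A. lra.
Qed.


Lemma cont3_1d (h : R -> R) t x y : ex_derive h t -> cont3_at (fun s _ _ => h s) t x y.
Proof.
  intros Hd. pose proof (ex_derive_continuous h t Hd) as Hc.
  intros e he. destruct (proj1 (filterlim_locally h (h t)) Hc (mkposreal e he)) as [d Hd'].
  exists d; split; [apply cond_pos|]. intros t' x' y' a _ _. apply (Hd' t'). exact a.
Qed.

Definition smooth0 (V : R -> R -> R -> Prop) (w : fn) : Prop :=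
  forall t x y, V t x y ->
    cont3_at w t x y /\
    ex_derive (fun s => w s x y) t /\
    ex_derive (fun s => w t s y) x /\
    ex_derive (fun s => w t x s) y.
Definition smn V n w := forall l, (length l <= n)%nat -> smooth0 V (pdI l w).
Definition sm V w := forall n, smn V n w.

Lemma smooth_on_sm (U V : R -> R -> R -> Prop) w :
  (forall t x y, V t x y -> U t x y) -> smooth_on U w -> sm V w.
Proof. intros HUV Hs n l _ t x y h. apply (Hs l t x y (HUV _ _ _ h)). Qed.

Lemma pdI_app l1 l2 w : pdI (l1 ++ l2) w = pdI l1 (pdI l2 w).
Proof. unfold pdI. apply fold_right_app. Qed.

Lemma smn_0 V w : smn V 0 w <-> smooth0 V w.
Proof.
  split. intros H; apply (H []); simpl; lia.
  intros H l hl; destruct l; simpl in *; [auto|lia].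
Qed.

Lemma smn_S V n w : smn V (S n) w <-> smooth0 V w /\ forall a, smn V n (pd a w).
Proof.
  split.
  - intros H; split. apply (H []); simpl; lia.
    intros a l hl. replace (pdI l (pd a w)) with (pdI (l ++ [a]) w).
    apply H. rewrite app_length; simpl; lia. rewrite pdI_app; reflexivity.
  - intros [H0 H1] l hl. induction l as [|a l' _] using rev_ind.
    + exact H0.
    + rewrite pdI_app. apply H1. rewrite length_app in hl; simpl in hl; lia.
Qed.

Lemma smn_mono V n w : smn V (S n) w -> smn V n w.
Proof. intros H l hl; apply H; lia. Qed.
Lemma smn_mono' V n m w : (n <= m)%nat -> smn V m w -> smn V n w.
Proof. intros Hnm H l hl; apply H; lia. Qed.

Lemma smooth0_ext V f g : open3 V -> eqV V f g -> smooth0 V f -> smooth0 V g.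
Proof.
  intros HV He Hf t x y h. destruct (Hf t x y h) as [Hc [H1 [H2 H3]]].
  destruct (HV t x y h) as [eps [Heps Hn]].
  split; [|split; [|split]].
  - intros e he. destruct (Hc e he) as [d [hd Hd]].
    exists (Rmin d eps); split; [apply Rmin_glb_lt; auto|].
    intros t' x' y' a b c. assert (Hm1 := Rmin_l d eps). assert (Hm2 := Rmin_r d eps).
    rewrite <- (He t' x' y'), <- (He t x y); auto. apply Hd; lra. apply Hn; lra.
  - apply (ex_derive_ext_loc (fun s => f s x y)); auto. apply (locally_of _ eps); auto.
    intros s hs; apply He, Hn; auto; rewrite Rminus_diag, Rabs_R0; auto.
  - apply (ex_derive_ext_loc (fun s => f t s y)); auto. apply (locally_of _ eps); auto.
    intros s hs; apply He, Hn; auto; rewrite Rminus_diag, Rabs_R0; auto.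
  - apply (ex_derive_ext_loc (fun s => f t x s)); auto. apply (locally_of _ eps); auto.
    intros s hs; apply He, Hn; auto; rewrite Rminus_diag, Rabs_R0; auto.
Qed.

Lemma smn_ext V n f g : open3 V -> eqV V f g -> smn V n f -> smn V n g.
Proof. intros HV He H l hl. apply (smooth0_ext V (pdI l f)); auto. apply eqV_pdI; auto. Qed.
Lemma sm_ext V f g : open3 V -> eqV V f g -> sm V f -> sm V g.
Proof. intros HV He H n. apply (smn_ext V n f); auto. Qed.

Lemma pd_plus_eq V a f g : smooth0 V f -> smooth0 V g ->
  eqV V (pd a (fplus f g)) (fplus (pd a f) (pd a g)).
Proof.
  intros Hf Hg t x y h. destruct (Hf t x y h) as [_ [f1 [f2 f3]]].
  destruct (Hg t x y h) as [_ [g1 [g2 g3]]].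
  destruct a; simpl; unfold fplus.
  apply (Derive_plus (fun s => f s x y) (fun s => g s x y)); auto.
  apply (Derive_plus (fun s => f t s y) (fun s => g t s y)); auto.
  apply (Derive_plus (fun s => f t x s) (fun s => g t x s)); auto.
Qed.

Lemma pd_mult_eq V a f g : smooth0 V f -> smooth0 V g ->
  eqV V (pd a (fmult f g)) (fplus (fmult (pd a f) g) (fmult f (pd a g))).
Proof.
  intros Hf Hg t x y h. destruct (Hf t x y h) as [_ [f1 [f2 f3]]].
  destruct (Hg t x y h) as [_ [g1 [g2 g3]]].
  destruct a; simpl; unfold fplus, fmult.
  apply (Derive_mult (fun s => f s x y) (fun s => g s x y)); auto.
  apply (Derive_mult (fun s => f t s y) (fun s => g t s y)); auto.
  apply (Derive_mult (fun s => f t x s) (fun s => g t x s)); auto.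
Qed.

Lemma pd_scal_eq a c f : forall t x y, pd a (fscal c f) t x y = fscal c (pd a f) t x y.
Proof.
  intros t x y; destruct a; simpl; unfold fscal.
  apply (Derive_scal (fun s => f s x y)).
  apply (Derive_scal (fun s => f t s y)).
  apply (Derive_scal (fun s => f t x s)).
Qed.

Lemma pd_const_eq a c : forall t x y, pd a (fconst c) t x y = 0.
Proof. intros; destruct a; simpl; unfold fconst; apply Derive_const. Qed.

Lemma smooth0_plus V f g : smooth0 V f -> smooth0 V g -> smooth0 V (fplus f g).
Proof.
  intros Hf Hg t x y h. destruct (Hf t x y h) as [f0 [f1 [f2 f3]]].
  destruct (Hg t x y h) as [g0 [g1 [g2 g3]]].
  split; [apply cont3_plus; auto|]. unfold fplus.
  split; [apply (ex_derive_plus (fun s => f s x y) (fun s => g s x y)); auto|].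
  split; [apply (ex_derive_plus (fun s => f t s y) (fun s => g t s y)); auto|].
  apply (ex_derive_plus (fun s => f t x s) (fun s => g t x s)); auto.
Qed.

Lemma smooth0_mult V f g : smooth0 V f -> smooth0 V g -> smooth0 V (fmult f g).
Proof.
  intros Hf Hg t x y h. destruct (Hf t x y h) as [f0 [f1 [f2 f3]]].
  destruct (Hg t x y h) as [g0 [g1 [g2 g3]]].
  split; [apply cont3_mult; auto|]. unfold fmult.
  split; [apply (ex_derive_mult (fun s => f s x y) (fun s => g s x y)); auto|].
  split; [apply (ex_derive_mult (fun s => f t s y) (fun s => g t s y)); auto|].
  apply (ex_derive_mult (fun s => f t x s) (fun s => g t x s)); auto.
Qed.

Lemma smooth0_const V c : smooth0 V (fconst c).
Proof.
  intros t x y h; split; [apply cont3_const|]; unfold fconst.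
  repeat split; apply ex_derive_const.
Qed.

Lemma smn_plus V n f g : open3 V -> smn V n f -> smn V n g -> smn V n (fplus f g).
Proof.
  intros HV; revert f g; induction n; intros f g Hf Hg.
  - apply smn_0; apply smn_0 in Hf; apply smn_0 in Hg; apply smooth0_plus; auto.
  - apply smn_S in Hf as [f0 f1]; apply smn_S in Hg as [g0 g1].
    apply smn_S; split; [apply smooth0_plus; auto|].
    intros a. apply (smn_ext V n (fplus (pd a f) (pd a g))); auto.
    apply eqV_sym, pd_plus_eq; auto.
Qed.

Lemma smn_const V n c : open3 V -> smn V n (fconst c).
Proof.
  intros HV; revert c; induction n; intros c.
  - apply smn_0, smooth0_const.
  - apply smn_S; split; [apply smooth0_const|]. intros a.
    apply (smn_ext V n (fconst 0)); auto. intros t x y _; rewrite pd_const_eq; reflexivity.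
Qed.

Lemma smn_mult V n f g : open3 V -> smn V n f -> smn V n g -> smn V n (fmult f g).
Proof.
  intros HV; revert f g; induction n; intros f g Hf Hg.
  - apply smn_0; apply smn_0 in Hf; apply smn_0 in Hg; apply smooth0_mult; auto.
  - pose proof (smn_mono _ _ _ Hf) as Hf'. pose proof (smn_mono _ _ _ Hg) as Hg'.
    apply smn_S in Hf as [f0 f1]; apply smn_S in Hg as [g0 g1].
    apply smn_S; split; [apply smooth0_mult; auto|].
    intros a. apply (smn_ext V n (fplus (fmult (pd a f) g) (fmult f (pd a g)))); auto.
    apply eqV_sym, pd_mult_eq; auto.
    apply smn_plus; auto.
Qed.

Lemma sm_plus V f g : open3 V -> sm V f -> sm V g -> sm V (fplus f g).
Proof. intros HV Hf Hg n; apply smn_plus; auto. Qed.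
Lemma sm_mult V f g : open3 V -> sm V f -> sm V g -> sm V (fmult f g).
Proof. intros HV Hf Hg n; apply smn_mult; auto. Qed.
Lemma sm_const V c : open3 V -> sm V (fconst c).
Proof. intros HV n; apply smn_const; auto. Qed.
Lemma sm_scal V c f : open3 V -> sm V f -> sm V (fscal c f).
Proof. intros HV Hf. apply (sm_mult V (fconst c) f); auto. apply sm_const; auto. Qed.
Lemma sm_minus V f g : open3 V -> sm V f -> sm V g -> sm V (fminus f g).
Proof. intros HV Hf Hg. apply sm_plus; auto. apply sm_scal; auto. Qed.
Lemma sm_pd V a f : sm V f -> sm V (pd a f).
Proof. intros Hf n. destruct (proj1 (smn_S V n f) (Hf (S n))) as [_ H]. auto. Qed.
Lemma sm_smooth0 V f : sm V f -> smooth0 V f.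
Proof. intros H; apply smn_0, H. Qed.

Lemma sm_affine V w : open3 V -> smooth0 V w -> (forall a, exists c, eqV V (pd a w) (fconst c)) -> sm V w.
Proof.
  intros HV H0 H1 n; destruct n. apply smn_0; auto.
  apply smn_S; split; auto. intros a; destruct (H1 a) as [c Hc].
  apply (smn_ext V n (fconst c)); auto. apply eqV_sym; auto. apply smn_const; auto.
Qed.

Lemma sm_t V : open3 V -> sm V ft.
Proof.
  intros HV; apply sm_affine; auto.
  - intros t x y h; split; [apply cont3_t|]; unfold ft.
    split; [apply ex_derive_id|]; split; apply ex_derive_const.
  - intros a; destruct a; [exists 1|exists 0|exists 0]; intros t x y _; simpl; unfold ft, fconst.
    apply Derive_id. apply Derive_const. apply Derive_const.
Qed.

Lemma sm_coord V b : open3 V -> sm V (coord b).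
Proof.
  intros HV; apply sm_affine; auto.
  - intros t x y h; split; [apply cont3_coord|]; destruct b; simpl.
    split; [apply ex_derive_const|]; split; [apply ex_derive_id|apply ex_derive_const].
    split; [apply ex_derive_const|]; split; [apply ex_derive_const|apply ex_derive_id].
  - intros a; destruct a, b; [exists 0|exists 0|exists 1|exists 0|exists 0|exists 1];
    intros t x y _; simpl; unfold fconst; try apply Derive_id; apply Derive_const.
Qed.

Lemma sm_inv V : open3 V -> (forall t x y, V t x y -> 0 < t) -> sm V finv.
Proof.
  intros HV Ht n. induction n.
  - apply smn_0. intros t x y h. pose proof (Ht t x y h).
    split. apply (cont3_1d (fun s => / s)). auto_derive; lra.
    unfold finv. split. auto_derive; lra. split; apply ex_derive_const.
  - apply smn_S; split. apply smn_0. apply (smn_mono' V 0 n); [lia|auto].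
    intros a; destruct a.
    + apply (smn_ext V n (fscal (-1) (fmult finv finv))); auto.
      * intros t x y h; pose proof (Ht t x y h). simpl; unfold finv, fscal, fmult.
        rewrite Derive_inv. rewrite Derive_id. field. lra. apply ex_derive_id. lra.
      * apply smn_mult; auto. apply smn_const; auto. apply smn_mult; auto.
    + apply (smn_ext V n (fconst 0)); auto. intros t x y h; simpl; unfold finv, fconst.
      symmetry; apply Derive_const. apply smn_const; auto.
    + apply (smn_ext V n (fconst 0)); auto. intros t x y h; simpl; unfold finv, fconst.
      symmetry; apply Derive_const. apply smn_const; auto.
Qed.


Definition cont2 (h : R -> R -> R) u v := forall e, 0 < e -> exists d, 0 < d /\
  forall a b, Rabs (a - u) < d -> Rabs (b - v) < d -> Rabs (h a b - h u v) < e.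

Lemma c2_cont (h : R -> R -> R) u v : cont2 h u v -> continuity_2d_pt h u v.
Proof.
  intros H eps. destruct (H eps (cond_pos eps)) as [d [hd Hd]].
  exists (mkposreal d hd). intros a b ha hb. apply Hd; auto.
Qed.

Lemma schw2 (f : R -> R -> R) u v eps : 0 < eps ->
  (forall u' v', Rabs (u' - u) < eps -> Rabs (v' - v) < eps ->
     ex_derive (fun z => f z v') u' /\ ex_derive (fun z => f u' z) v' /\
     ex_derive (fun z => Derive (fun t => f z t) v') u' /\
     ex_derive (fun z => Derive (fun t => f t z) u') v') ->
  cont2 (fun a b => Derive (fun z => Derive (fun t => f z t) b) a) u v ->
  cont2 (fun a b => Derive (fun z => Derive (fun t => f t z) a) b) u v ->
  Derive (fun z => Derive (fun t => f z t) v) u = Derive (fun z => Derive (fun t => f t z) u) v.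
Proof.
  intros he H Hc1 Hc2. apply Schwarz.
  - exists (mkposreal eps he). intros a b ha hb. apply H; auto.
  - apply c2_cont; auto.
  - apply c2_cont; auto.
Qed.

Lemma sm_pdpd V a b w : sm V w -> sm V (pd a (pd b w)).
Proof. intros H; apply sm_pd, sm_pd, H. Qed.

Lemma schwarz_01 V w t x y : open3 V -> sm V w -> V t x y ->
  pd D0 (pd D1 w) t x y = pd D1 (pd D0 w) t x y.
Proof.
  intros HV Hw h. destruct (HV t x y h) as [eps [he Hn]].
  simpl. apply (schw2 (fun p q => w p q y) t x eps he).
  - intros u' v' h1 h2. assert (hv : V u' v' y) by (apply Hn; auto; rewrite Rminus_diag, Rabs_R0; auto).
    destruct (sm_smooth0 V w Hw u' v' y hv) as [_ [A1 [A2 _]]].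
    destruct (sm_smooth0 V (pd D1 w) (sm_pd _ _ _ Hw) u' v' y hv) as [_ [B1 _]].
    destruct (sm_smooth0 V (pd D0 w) (sm_pd _ _ _ Hw) u' v' y hv) as [_ [_ [C2 _]]].
    auto.
  - destruct (sm_smooth0 V _ (sm_pdpd V D0 D1 w Hw) t x y h) as [Hc _].
    intros e he'. destruct (Hc e he') as [d [hd Hd]]. exists d; split; auto.
    intros a b ha hb. apply (Hd a b y); auto. rewrite Rminus_diag, Rabs_R0; auto.
  - destruct (sm_smooth0 V _ (sm_pdpd V D1 D0 w Hw) t x y h) as [Hc _].
    intros e he'. destruct (Hc e he') as [d [hd Hd]]. exists d; split; auto.
    intros a b ha hb. apply (Hd a b y); auto. rewrite Rminus_diag, Rabs_R0; auto.
Qed.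

Lemma schwarz_02 V w t x y : open3 V -> sm V w -> V t x y ->
  pd D0 (pd D2 w) t x y = pd D2 (pd D0 w) t x y.
Proof.
  intros HV Hw h. destruct (HV t x y h) as [eps [he Hn]].
  simpl. apply (schw2 (fun p q => w p x q) t y eps he).
  - intros u' v' h1 h2. assert (hv : V u' x v') by (apply Hn; auto; rewrite Rminus_diag, Rabs_R0; auto).
    destruct (sm_smooth0 V w Hw u' x v' hv) as [_ [A1 [_ A3]]].
    destruct (sm_smooth0 V (pd D2 w) (sm_pd _ _ _ Hw) u' x v' hv) as [_ [B1 _]].
    destruct (sm_smooth0 V (pd D0 w) (sm_pd _ _ _ Hw) u' x v' hv) as [_ [_ [_ C3]]].
    auto.
  - destruct (sm_smooth0 V _ (sm_pdpd V D0 D2 w Hw) t x y h) as [Hc _].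
    intros e he'. destruct (Hc e he') as [d [hd Hd]]. exists d; split; auto.
    intros a b ha hb. apply (Hd a x b); auto. rewrite Rminus_diag, Rabs_R0; auto.
  - destruct (sm_smooth0 V _ (sm_pdpd V D2 D0 w Hw) t x y h) as [Hc _].
    intros e he'. destruct (Hc e he') as [d [hd Hd]]. exists d; split; auto.
    intros a b ha hb. apply (Hd a x b); auto. rewrite Rminus_diag, Rabs_R0; auto.
Qed.

Lemma schwarz_12 V w t x y : open3 V -> sm V w -> V t x y ->
  pd D1 (pd D2 w) t x y = pd D2 (pd D1 w) t x y.
Proof.
  intros HV Hw h. destruct (HV t x y h) as [eps [he Hn]].
  simpl. apply (schw2 (fun p q => w t p q) x y eps he).
  - intros u' v' h1 h2. assert (hv : V t u' v') by (apply Hn; auto; rewrite Rminus_diag, Rabs_R0; auto).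
    destruct (sm_smooth0 V w Hw t u' v' hv) as [_ [_ [A2 A3]]].
    destruct (sm_smooth0 V (pd D2 w) (sm_pd _ _ _ Hw) t u' v' hv) as [_ [_ [B2 _]]].
    destruct (sm_smooth0 V (pd D1 w) (sm_pd _ _ _ Hw) t u' v' hv) as [_ [_ [_ C3]]].
    auto.
  - destruct (sm_smooth0 V _ (sm_pdpd V D1 D2 w Hw) t x y h) as [Hc _].
    intros e he'. destruct (Hc e he') as [d [hd Hd]]. exists d; split; auto.
    intros a b ha hb. apply (Hd t a b); auto. rewrite Rminus_diag, Rabs_R0; auto.
  - destruct (sm_smooth0 V _ (sm_pdpd V D2 D1 w Hw) t x y h) as [Hc _].
    intros e he'. destruct (Hc e he') as [d [hd Hd]]. exists d; split; auto.
    intros a b ha hb. apply (Hd t a b); auto. rewrite Rminus_diag, Rabs_R0; auto.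
Qed.

Lemma schwarz V a b w : open3 V -> sm V w -> eqV V (pd a (pd b w)) (pd b (pd a w)).
Proof.
  intros HV Hw t x y h.
  destruct a, b.
  - reflexivity.
  - apply (schwarz_01 V); auto.
  - apply (schwarz_02 V); auto.
  - symmetry; apply (schwarz_01 V); auto.
  - reflexivity.
  - apply (schwarz_12 V); auto.
  - symmetry; apply (schwarz_02 V); auto.
  - symmetry; apply (schwarz_12 V); auto.
  - reflexivity.
Qed.


Definition dl (a c : idx3) : R :=
  match a, c with D0, D0 => 1 | D1, D1 => 1 | D2, D2 => 1 | _, _ => 0 end.

Lemma dl_abs a c : Rabs (dl a c) <= 1.
Proof. destruct a, c; simpl; rewrite ?Rabs_R1, ?Rabs_R0; lra. Qed.

Lemma boost_split b w : boost b w = fplus (fmult (coord b) (pd D0 w)) (fmult ft (pd (idx_of b) w)).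
Proof. reflexivity. Qed.

Lemma sm_boost V b w : open3 V -> sm V w -> sm V (boost b w).
Proof.
  intros HV Hw. rewrite boost_split. apply sm_plus; auto; apply sm_mult; auto.
  apply sm_coord; auto. apply sm_pd; auto. apply sm_t; auto. apply sm_pd; auto.
Qed.

Lemma pd_coord a b t x y : pd a (coord b) t x y = dl a (idx_of b).
Proof.
  destruct a, b; simpl; first [apply Derive_id | apply Derive_const].
Qed.

Lemma pd_ft a t x y : pd a ft t x y = dl a D0.
Proof.
  destruct a; unfold ft; simpl; first [apply Derive_id | apply Derive_const].
Qed.

Lemma boost_plus_eq V b f g : smooth0 V f -> smooth0 V g ->
  eqV V (boost b (fplus f g)) (fplus (boost b f) (boost b g)).
Proof.
  intros Hf Hg t x y h. unfold boost.
  rewrite (pd_plus_eq V D0 f g Hf Hg t x y h), (pd_plus_eq V (idx_of b) f g Hf Hg t x y h).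
  unfold fplus; ring.
Qed.

Lemma boost_scal_eq b c f : forall t x y, boost b (fscal c f) t x y = fscal c (boost b f) t x y.
Proof. intros t x y; unfold boost; rewrite !pd_scal_eq; unfold fscal; ring. Qed.

Lemma boost_const_eq b c : forall t x y, boost b (fconst c) t x y = 0.
Proof. intros t x y; unfold boost; rewrite !pd_const_eq; ring. Qed.

Lemma boost_mult_eq V b f g : smooth0 V f -> smooth0 V g ->
  eqV V (boost b (fmult f g)) (fplus (fmult (boost b f) g) (fmult f (boost b g))).
Proof.
  intros Hf Hg t x y h. unfold boost.
  rewrite (pd_mult_eq V D0 f g Hf Hg t x y h), (pd_mult_eq V (idx_of b) f g Hf Hg t x y h).
  unfold fplus, fmult; ring.
Qed.

Lemma pd_boost_eq V a b w : open3 V -> sm V w ->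
  eqV V (pd a (boost b w))
    (fplus (boost b (pd a w))
       (fplus (fscal (dl a (idx_of b)) (pd D0 w)) (fscal (dl a D0) (pd (idx_of b) w)))).
Proof.
  intros HV Hw t x y h. rewrite boost_split.
  assert (S1 : sm V (fmult (coord b) (pd D0 w))).
  { apply sm_mult; auto. apply sm_coord; auto. apply sm_pd; auto. }
  assert (S2 : sm V (fmult ft (pd (idx_of b) w))).
  { apply sm_mult; auto. apply sm_t; auto. apply sm_pd; auto. }
  rewrite (pd_plus_eq V a _ _ (sm_smooth0 _ _ S1) (sm_smooth0 _ _ S2) t x y h).
  unfold fplus at 1.
  rewrite (pd_mult_eq V a _ _ (sm_smooth0 _ _ (sm_coord V b HV)) (sm_smooth0 _ _ (sm_pd V D0 w Hw)) t x y h).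
  rewrite (pd_mult_eq V a _ _ (sm_smooth0 _ _ (sm_t V HV)) (sm_smooth0 _ _ (sm_pd V _ w Hw)) t x y h).
  unfold fplus, fmult, fscal, boost.
  rewrite pd_coord, pd_ft.
  rewrite (schwarz V a D0 w HV Hw t x y h), (schwarz V a (idx_of b) w HV Hw t x y h).
  unfold ft; ring.
Qed.


Inductive Comb (V : R -> R -> R -> Prop) (B : fn -> Prop) : R -> fn -> Prop :=
| cb_zero : Comb V B 0 (fconst 0)
| cb_base : forall b, B b -> Comb V B 1 b
| cb_plus : forall c1 c2 v1 v2, Comb V B c1 v1 -> Comb V B c2 v2 -> Comb V B (c1 + c2) (fplus v1 v2)
| cb_scal : forall k c v, Comb V B c v -> Comb V B (Rabs k * c) (fscal k v)
| cb_ext : forall c v w, Comb V B c v -> eqV V v w -> Comb V B c w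
| cb_mono : forall c c' v, Comb V B c v -> c <= c' -> Comb V B c' v.

Lemma comb_nonneg V B c v : Comb V B c v -> 0 <= c.
Proof.
  induction 1; try lra. apply Rmult_le_pos; auto; apply Rabs_pos.
Qed.

Lemma comb_sm V B c v : open3 V -> (forall b, B b -> sm V b) -> Comb V B c v -> sm V v.
Proof.
  intros HV HB; induction 1; auto.
  - apply sm_const; auto.
  - apply sm_plus; auto.
  - apply sm_scal; auto.
  - apply (sm_ext V v); auto.
Qed.

Lemma comb_bound V B c v t x y M : V t x y -> 0 <= M ->
  (forall b, B b -> Rabs (b t x y) <= M) -> Comb V B c v -> Rabs (v t x y) <= c * M.
Proof.
  intros h hM HB; induction 1.
  - unfold fconst; rewrite Rabs_R0; lra.
  - rewrite Rmult_1_l; auto.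
  - unfold fplus; eapply Rle_trans; [apply Rabs_triang|]. lra.
  - unfold fscal; rewrite Rabs_mult, Rmult_assoc. apply Rmult_le_compat_l; auto; apply Rabs_pos.
  - rewrite <- H0; auto.
  - eapply Rle_trans; [apply IHComb|]. apply Rmult_le_compat_r; auto.
Qed.

Lemma comb_incl V (B B' : fn -> Prop) c v : (forall b, B b -> B' b) -> Comb V B c v -> Comb V B' c v.
Proof.
  intros HB; induction 1.
  - apply cb_zero.
  - apply cb_base; auto.
  - apply cb_plus; auto.
  - apply cb_scal; auto.
  - eapply cb_ext; eauto.
  - eapply cb_mono; eauto.
Qed.

Definition linop (V : R -> R -> R -> Prop) (T : fn -> fn) : Prop :=
  (forall f g, eqV V f g -> eqV V (T f) (T g)) /\
  (forall f g, sm V f -> sm V g -> eqV V (T (fplus f g)) (fplus (T f) (T g))) /\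
  (forall k f, sm V f -> eqV V (T (fscal k f)) (fscal k (T f))) /\
  eqV V (T (fconst 0)) (fconst 0).

Lemma comb_transport V T B B' c0 c v : open3 V -> linop V T ->
  (forall b, B b -> sm V b) -> (forall b, B b -> Comb V B' c0 (T b)) -> 0 <= c0 ->
  Comb V B c v -> Comb V B' (c * c0) (T v).
Proof.
  intros HV [L1 [L2 [L3 L4]]] HB HT hc0; induction 1.
  - apply (cb_mono _ _ 0); [|lra]. apply (cb_ext _ _ _ (fconst 0)); [apply cb_zero|].
    apply eqV_sym; auto.
  - rewrite Rmult_1_l; auto.
  - rewrite Rmult_plus_distr_r. apply (cb_ext _ _ _ (fplus (T v1) (T v2))).
    apply cb_plus; auto. apply eqV_sym, L2; [apply (comb_sm V B c1 v1 HV HB)|apply (comb_sm V B c2 v2 HV HB)]; auto.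
  - rewrite Rmult_assoc. apply (cb_ext _ _ _ (fscal k (T v))). apply cb_scal; auto.
    apply eqV_sym, L3; apply (comb_sm V B c v HV HB); auto.
  - apply (cb_ext _ _ _ (T v)); auto.
  - apply (cb_mono _ _ (c * c0)); auto. apply Rmult_le_compat_r; auto.
Qed.

Lemma comb_multl V B c v h : Comb V B c v ->
  Comb V (fun bb => exists b, B b /\ bb = fmult h b) c (fmult h v).
Proof.
  induction 1.
  - apply (cb_ext _ _ _ (fconst 0)). apply cb_zero. intros t x y _; unfold fmult, fconst; ring.
  - apply cb_base. exists b; auto.
  - apply (cb_ext _ _ _ (fplus (fmult h v1) (fmult h v2))). apply cb_plus; auto.
    intros t x y _; unfold fmult, fplus; ring.
  - apply (cb_ext _ _ _ (fscal k (fmult h v))). apply cb_scal; auto.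
    intros t x y _; unfold fmult, fscal; ring.
  - apply (cb_ext _ _ _ (fmult h v)); auto. apply eqV_mult; auto. apply eqV_refl.
  - eapply cb_mono; eauto.
Qed.

Lemma comb_minus V B c1 c2 v1 v2 : Comb V B c1 v1 -> Comb V B c2 v2 -> Comb V B (c1 + c2) (fminus v1 v2).
Proof.
  intros H1 H2. unfold fminus. apply cb_plus; auto.
  apply (cb_mono _ _ (Rabs (-1) * c2)). apply cb_scal; auto.
  replace (Rabs (-1)) with 1; [lra|]. rewrite Rabs_left; lra.
Qed.

Lemma linop_pd V a : open3 V -> linop V (pd a).
Proof.
  intros HV; split; [|split; [|split]].
  - intros f g H; apply eqV_pd; auto.
  - intros f g Hf Hg; apply pd_plus_eq; apply sm_smooth0; auto.
  - intros k f _ t x y _; apply pd_scal_eq.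
  - intros t x y _; rewrite pd_const_eq; reflexivity.
Qed.

Lemma linop_boost V b : open3 V -> linop V (boost b).
Proof.
  intros HV; split; [|split; [|split]].
  - intros f g H; apply eqV_boost; auto.
  - intros f g Hf Hg; apply boost_plus_eq; apply sm_smooth0; auto.
  - intros k f _ t x y _; apply boost_scal_eq.
  - intros t x y _; rewrite boost_const_eq; reflexivity.
Qed.

Lemma linop_zop V z : open3 V -> linop V (apply_zop z).
Proof. intros HV; destruct z; simpl; [apply linop_pd|apply linop_boost]; auto. Qed.

Lemma sm_zop V z w : open3 V -> sm V w -> sm V (apply_zop z w).
Proof. intros HV H; destruct z; simpl; [apply sm_pd|apply sm_boost]; auto. Qed.

Lemma sm_applyZ V K w : open3 V -> sm V w -> sm V (applyZ K w).
Proof. intros HV H; induction K; simpl; auto. apply sm_zop; auto. Qed.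

Lemma zop_mult_eq V z f g : open3 V -> sm V f -> sm V g ->
  eqV V (apply_zop z (fmult f g)) (fplus (fmult (apply_zop z f) g) (fmult f (apply_zop z g))).
Proof.
  intros HV Hf Hg; destruct z; simpl.
  apply pd_mult_eq; apply sm_smooth0; auto.
  apply boost_mult_eq; apply sm_smooth0; auto.
Qed.

Lemma eqV_zop V z f g : open3 V -> eqV V f g -> eqV V (apply_zop z f) (apply_zop z g).
Proof. intros HV H; destruct z; simpl; [apply eqV_pd|apply eqV_boost]; auto. Qed.

Lemma eqV_applyZ V K f g : open3 V -> eqV V f g -> eqV V (applyZ K f) (applyZ K g).
Proof. intros HV H; induction K; simpl; auto. apply eqV_zop; auto. Qed.


Lemma In_lists_len {A : Type} (xs : list A) n l :
  length l = n -> (forall a, In a l -> In a xs) -> In l (lists_len xs n).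
Proof.
  revert l; induction n; intros l hl hx.
  - destruct l; simpl in *; [auto|lia].
  - destruct l as [|a l]; simpl in hl; [lia|]. simpl. apply in_flat_map.
    exists l; split. apply IHn; [lia|]. intros b hb; apply hx; simpl; auto.
    apply (in_map (fun a0 => a0 :: l)). apply hx; simpl; auto.
Qed.

Lemma In_lists_upto {A : Type} (xs : list A) n l :
  (length l <= n)%nat -> (forall a, In a l -> In a xs) -> In l (lists_upto xs n).
Proof.
  intros hl hx. unfold lists_upto. apply in_flat_map. exists (length l); split.
  apply in_seq; lia. apply In_lists_len; auto.
Qed.

Lemma Rmax_fold_ge l a : In a l -> a <= fold_right Rmax 0 l.
Proof.
  induction l; simpl; [tauto|]. intros [-> | h].
  apply Rmax_l. eapply Rle_trans; [apply IHl; auto|apply Rmax_r].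
Qed.

Lemma Rmax_fold_nonneg l : 0 <= fold_right Rmax 0 l.
Proof. induction l; simpl; [lra|]. eapply Rle_trans; [apply IHl|apply Rmax_r]. Qed.

Lemma sumR_nonneg l : (forall b, In b l -> 0 <= b) -> 0 <= sumR l.
Proof.
  induction l; simpl; intros hp; [lra|].
  assert (0 <= a) by (apply hp; auto). assert (0 <= sumR l); [apply IHl; auto|lra].
Qed.

Lemma sumR_ge l a : In a l -> (forall b, In b l -> 0 <= b) -> a <= sumR l.
Proof.
  induction l as [|c l IH]; simpl; [tauto|]. intros [-> | h] hp.
  - assert (0 <= sumR l); [apply sumR_nonneg; auto|lra].
  - assert (0 <= c) by (apply hp; simpl; auto).
    assert (a <= sumR l); [apply IH; auto|lra].
Qed.

Lemma all_zop_in z : In z all_zop.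
Proof. destruct z as [a|b]; [destruct a|destruct b]; simpl; tauto. Qed.
Lemma all_idx3_in a : In a all_idx3.
Proof. destruct a; simpl; tauto. Qed.
Lemma all_idx2_in a : In a all_idx2.
Proof. destruct a; simpl; tauto. Qed.

Lemma normpk_ge p k w K t x y : (length K <= p)%nat -> (numL K <= k)%nat ->
  Rabs (applyZ K w t x y) <= normpk p k w t x y.
Proof.
  intros hp hk. unfold normpk. apply Rmax_fold_ge.
  apply (in_map (fun K0 => Rabs (applyZ K0 w t x y))). apply filter_In; split.
  apply In_lists_upto; auto. intros; apply all_zop_in.
  apply Nat.leb_le; auto.
Qed.

Lemma normpk_nonneg p k w t x y : 0 <= normpk p k w t x y.
Proof. apply Rmax_fold_nonneg. Qed.

Lemma normd_ge p k u K b t x y : (length K <= p)%nat -> (numL K <= k)%nat ->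
  Rabs (applyZ K (pd b u) t x y) <= normd p k u t x y.
Proof.
  intros hp hk. unfold normd. pose proof (normpk_ge p k (pd b u) K t x y hp hk).
  destruct b.
  - eapply Rle_trans; [apply H|apply Rmax_l].
  - eapply Rle_trans; [apply H|]. eapply Rle_trans; [apply Rmax_l|apply Rmax_r].
  - eapply Rle_trans; [apply H|]. eapply Rle_trans; [apply Rmax_r|apply Rmax_r].
Qed.

Lemma normd_nonneg p k u t x y : 0 <= normd p k u t x y.
Proof. unfold normd. eapply Rle_trans; [apply normpk_nonneg|apply Rmax_l]. Qed.

Lemma applyZ_app K1 K2 w : applyZ (K1 ++ K2) w = applyZ K1 (applyZ K2 w).
Proof. unfold applyZ; apply fold_right_app. Qed.
Lemma applyZ_Zd I w : applyZ (map Zd I) w = pdI I w.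
Proof. induction I; simpl; auto. rewrite IHI; auto. Qed.
Lemma applyZ_ZL J w : applyZ (map ZL J) w = LJ J w.
Proof. induction J; simpl; auto. rewrite IHJ; auto. Qed.
Lemma applyZ_IJ I J w : applyZ (map Zd I ++ map ZL J) w = pdI I (LJ J w).
Proof. rewrite applyZ_app, applyZ_Zd, applyZ_ZL; auto. Qed.
Lemma numL_IJ I J : numL (map Zd I ++ map ZL J) = length J.
Proof. unfold numL. rewrite filter_app. rewrite length_app.
  induction I; simpl; [|auto]. induction J; simpl; auto. Qed.
Lemma length_IJ I J : length (map Zd I ++ map ZL J) = (length I + length J)%nat.
Proof. rewrite length_app, !length_map; auto. Qed.


Definition G (u : fn) (n m : nat) : fn -> Prop := fun b =>
  exists K be, (length K <= n)%nat /\ (numL K <= m)%nat /\ b = applyZ K (pd be u).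

Lemma G_sm V u n m : open3 V -> sm V u -> forall b, G u n m b -> sm V b.
Proof. intros HV Hu b [K [be [_ [_ ->]]]]. apply sm_applyZ; auto. apply sm_pd; auto. Qed.

Lemma G_incl u n m n' m' : (n <= n')%nat -> (m <= m')%nat -> forall b, G u n m b -> G u n' m' b.
Proof. intros h1 h2 b [K [be [k1 [k2 ->]]]]. exists K, be; repeat split; auto; lia. Qed.

Lemma G_bound u n m t x y b : G u n m b -> Rabs (b t x y) <= normd n m u t x y.
Proof. intros [K [be [k1 [k2 ->]]]]. apply normd_ge; auto. Qed.

Lemma numL_ZL b K : numL (ZL b :: K) = S (numL K).
Proof. reflexivity. Qed.
Lemma numL_Zd a K : numL (Zd a :: K) = numL K.
Proof. reflexivity. Qed.

Lemma stepA V u : open3 V -> sm V u -> forall K a,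
  Comb V (G u (length K) (numL K)) (3 ^ length K) (pd a (applyZ K u)).
Proof.
  intros HV Hu K; induction K as [|z K IH]; intros a.
  - simpl. apply (cb_mono _ _ 1); [|lra]. apply cb_base. exists [], a; simpl; repeat split; lia.
  - assert (Hp : 0 < 3 ^ length K) by (apply pow_lt; lra).
    assert (Sv : sm V (applyZ K u)) by (apply sm_applyZ; auto).
    destruct z as [be|b]; simpl.
    + apply (cb_ext _ _ _ (pd be (pd a (applyZ K u)))); [|apply schwarz; auto].
      apply (cb_mono _ _ (3 ^ length K * 1)); [|lra].
      apply (comb_transport V (pd be) (G u (length K) (numL K))); auto.
      * apply linop_pd; auto.
      * apply G_sm; auto.
      * intros b' [K' [g [k1 [k2 ->]]]]. apply cb_base. exists (Zd be :: K'), g.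
        simpl; repeat split; auto; lia.
      * lra.
    + rewrite numL_ZL.
      apply (cb_ext _ _ _ (fplus (boost b (pd a (applyZ K u)))
        (fplus (fscal (dl a (idx_of b)) (pd D0 (applyZ K u))) (fscal (dl a D0) (pd (idx_of b) (applyZ K u)))))).
      2: { apply eqV_sym, pd_boost_eq; auto. }
      assert (I1 := dl_abs a (idx_of b)). assert (I2 := dl_abs a D0).
      apply (cb_mono _ _ (3 ^ length K * 1 + (Rabs (dl a (idx_of b)) * 3 ^ length K + Rabs (dl a D0) * 3 ^ length K))).
      2: { assert (Rabs (dl a (idx_of b)) * 3 ^ length K <= 3 ^ length K) by nra.
           assert (Rabs (dl a D0) * 3 ^ length K <= 3 ^ length K) by nra. lra. }
      apply cb_plus; [|apply cb_plus; apply cb_scal].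
      * apply (comb_transport V (boost b) (G u (length K) (numL K))); auto.
        -- apply linop_boost; auto.
        -- apply G_sm; auto.
        -- intros b' [K' [g [k1 [k2 ->]]]]. apply cb_base. exists (ZL b :: K'), g.
           rewrite numL_ZL; simpl; repeat split; auto; lia.
        -- lra.
      * apply (comb_incl _ (G u (length K) (numL K))); [apply G_incl; lia|]. apply IH.
      * apply (comb_incl _ (G u (length K) (numL K))); [apply G_incl; lia|]. apply IH.
Qed.

Lemma stepA_bound V u K a t x y N M : open3 V -> sm V u -> V t x y ->
  (length K <= N)%nat -> (numL K <= M)%nat ->
  Rabs (pd a (applyZ K u) t x y) <= 3 ^ length K * normd N M u t x y.
Proof.
  intros HV Hu h h1 h2. apply (comb_bound V (G u N M)); auto. apply normd_nonneg.
  intros b hb; apply G_bound; auto.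
  apply (comb_incl _ (G u (length K) (numL K))); [apply G_incl; auto|]. apply stepA; auto.
Qed.


Lemma boost_app b w t x y : boost b w t x y = coord b t x y * pd D0 w t x y + t * pd (idx_of b) w t x y.
Proof. reflexivity. Qed.

Definition Fv (v : fn) t x y : R :=
  sumR (map (fun a => Rabs (pd a (boost Defs.B1 v) t x y) + Rabs (pd a (boost Defs.B2 v) t x y)
                     + Rabs (pd a v t x y)) all_idx3).

Lemma Fv_ge1 v t x y a b : Rabs (pd a (boost b v) t x y) <= Fv v t x y.
Proof.
  unfold Fv, all_idx3, sumR; cbn [map fold_right].
  pose proof (Rabs_pos (pd D0 (boost Defs.B1 v) t x y)). pose proof (Rabs_pos (pd D0 (boost Defs.B2 v) t x y)).
  pose proof (Rabs_pos (pd D1 (boost Defs.B1 v) t x y)). pose proof (Rabs_pos (pd D1 (boost Defs.B2 v) t x y)).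
  pose proof (Rabs_pos (pd D2 (boost Defs.B1 v) t x y)). pose proof (Rabs_pos (pd D2 (boost Defs.B2 v) t x y)).
  pose proof (Rabs_pos (pd D0 v t x y)). pose proof (Rabs_pos (pd D1 v t x y)).
  pose proof (Rabs_pos (pd D2 v t x y)).
  destruct a, b; lra.
Qed.

Lemma Fv_ge2 v t x y a : Rabs (pd a v t x y) <= Fv v t x y.
Proof.
  unfold Fv, all_idx3, sumR; cbn [map fold_right].
  pose proof (Rabs_pos (pd D0 (boost Defs.B1 v) t x y)). pose proof (Rabs_pos (pd D0 (boost Defs.B2 v) t x y)).
  pose proof (Rabs_pos (pd D1 (boost Defs.B1 v) t x y)). pose proof (Rabs_pos (pd D1 (boost Defs.B2 v) t x y)).
  pose proof (Rabs_pos (pd D2 (boost Defs.B1 v) t x y)). pose proof (Rabs_pos (pd D2 (boost Defs.B2 v) t x y)).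
  pose proof (Rabs_pos (pd D0 v t x y)). pose proof (Rabs_pos (pd D1 v t x y)).
  pose proof (Rabs_pos (pd D2 v t x y)).
  destruct a; lra.
Qed.

Lemma Fv_nonneg v t x y : 0 <= Fv v t x y.
Proof. eapply Rle_trans; [apply Rabs_pos|apply (Fv_ge2 v t x y D0)]. Qed.

Lemma key_ineq t c A B C D : 0 < t -> Rabs c <= t -> t * A = B - C - c * D ->
  Rabs A <= (Rabs B + Rabs C) / t + Rabs D.
Proof.
  intros ht hc hE.
  assert (hA : A = (B - C - c * D) / t) by (rewrite <- hE; field; lra).
  rewrite hA. unfold Rdiv. rewrite Rabs_mult, Rabs_inv, (Rabs_right t) by lra.
  assert (Rabs (B - C - c * D) <= Rabs B + Rabs C + t * Rabs D).
  { unfold Rminus. eapply Rle_trans; [apply Rabs_triang|]. rewrite Rabs_Ropp, Rabs_mult.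
    eapply Rle_trans. apply Rplus_le_compat_r. eapply Rle_trans; [apply Rabs_triang|].
    rewrite Rabs_Ropp. apply Rle_refl.
    assert (Rabs c * Rabs D <= t * Rabs D) by (apply Rmult_le_compat_r; [apply Rabs_pos|auto]). lra. }
  assert (/ t > 0) by (apply Rinv_0_lt_compat; lra).
  assert (Rabs (B - C - c * D) * / t <= (Rabs B + Rabs C + t * Rabs D) * / t) by
    (apply Rmult_le_compat_r; lra).
  replace ((Rabs B + Rabs C + t * Rabs D) * / t) with ((Rabs B + Rabs C) * / t + Rabs D) in H1 by (field; lra).
  lra.
Qed.

Lemma dd_L1 V v t x y b : open3 V -> sm V v -> V t x y -> 0 < t ->
  Rabs (coord b t x y) <= t ->
  Rabs (pd (idx_of b) (pd D0 v) t x y) <= Rabs (dtt v t x y) + 2 * Fv v t x y / t.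
Proof.
  intros HV Hv h ht hc.
  pose proof (pd_boost_eq V D0 b v HV Hv t x y h) as E.
  unfold fplus, fscal in E. rewrite (boost_app b (pd D0 v)) in E.
  assert (E2 : t * pd (idx_of b) (pd D0 v) t x y =
     pd D0 (boost b v) t x y - pd (idx_of b) v t x y - coord b t x y * dtt v t x y).
  { unfold dtt. destruct b; simpl dl in E; simpl idx_of in *; lra. }
  pose proof (key_ineq _ _ _ _ _ _ ht hc E2).
  pose proof (Fv_ge1 v t x y D0 b). pose proof (Fv_ge2 v t x y (idx_of b)).
  assert ((Rabs (pd D0 (boost b v) t x y) + Rabs (pd (idx_of b) v t x y)) / t <= (Fv v t x y + Fv v t x y) / t).
  { apply Rmult_le_compat_r. left; apply Rinv_0_lt_compat; lra. lra. }
  replace (2 * Fv v t x y / t) with ((Fv v t x y + Fv v t x y) / t) by (field; lra). lra.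
Qed.

Lemma dd_L2 V v t x y a b : open3 V -> sm V v -> V t x y -> 0 < t ->
  (forall b, Rabs (coord b t x y) <= t) ->
  Rabs (pd (idx_of b) (pd (idx_of a) v) t x y) <= Rabs (dtt v t x y) + 4 * Fv v t x y / t.
Proof.
  intros HV Hv h ht hc.
  pose proof (pd_boost_eq V (idx_of a) b v HV Hv t x y h) as E.
  unfold fplus, fscal in E. rewrite (boost_app b (pd (idx_of a) v)) in E.
  assert (E2 : t * pd (idx_of b) (pd (idx_of a) v) t x y =
     pd (idx_of a) (boost b v) t x y - dl (idx_of a) (idx_of b) * pd D0 v t x y
       - coord b t x y * pd D0 (pd (idx_of a) v) t x y).
  { assert (dl (idx_of a) D0 = 0) by (destruct a; reflexivity). rewrite H in E. lra. }
  pose proof (key_ineq _ _ _ _ _ _ ht (hc b) E2) as K.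
  pose proof (Fv_ge1 v t x y (idx_of a) b). pose proof (Fv_ge2 v t x y D0).
  assert (Rabs (dl (idx_of a) (idx_of b) * pd D0 v t x y) <= Fv v t x y).
  { rewrite Rabs_mult. pose proof (dl_abs (idx_of a) (idx_of b)).
    pose proof (Rabs_pos (pd D0 v t x y)). nra. }
  rewrite <- (schwarz V (idx_of a) D0 v HV Hv t x y h) in K.
  pose proof (dd_L1 V v t x y a HV Hv h ht (hc a)).
  assert ((Rabs (pd (idx_of a) (boost b v) t x y) + Rabs (dl (idx_of a) (idx_of b) * pd D0 v t x y)) / t
          <= (Fv v t x y + Fv v t x y) / t).
  { apply Rmult_le_compat_r. left; apply Rinv_0_lt_compat; lra. lra. }
  replace (4 * Fv v t x y / t) with ((Fv v t x y + Fv v t x y) / t + 2 * Fv v t x y / t) by (field; lra).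
  lra.
Qed.

Lemma secbound V v t x y g d : open3 V -> sm V v -> V t x y -> 0 < t ->
  (forall b, Rabs (coord b t x y) <= t) ->
  Rabs (pd g (pd d v) t x y) <= Rabs (dtt v t x y) + 4 * Fv v t x y / t.
Proof.
  intros HV Hv h ht hc.
  assert (0 <= 4 * Fv v t x y / t).
  { unfold Rdiv. apply Rmult_le_pos. pose proof (Fv_nonneg v t x y); lra.
    left; apply Rinv_0_lt_compat; lra. }
  assert (0 <= 2 * Fv v t x y / t).
  { unfold Rdiv. apply Rmult_le_pos. pose proof (Fv_nonneg v t x y); lra.
    left; apply Rinv_0_lt_compat; lra. }
  assert (L1 : forall b, Rabs (pd (idx_of b) (pd D0 v) t x y) <= Rabs (dtt v t x y) + 4 * Fv v t x y / t).
  { intros b. pose proof (dd_L1 V v t x y b HV Hv h ht (hc b)). lra. }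
  assert (L1' : forall b, Rabs (pd D0 (pd (idx_of b) v) t x y) <= Rabs (dtt v t x y) + 4 * Fv v t x y / t).
  { intros b. rewrite (schwarz V D0 (idx_of b) v HV Hv t x y h). apply L1. }
  destruct g, d.
  - unfold dtt. lra.
  - apply (L1' Defs.B1).
  - apply (L1' Defs.B2).
  - apply (L1 Defs.B1).
  - apply (dd_L2 V v t x y Defs.B1 Defs.B1); auto.
  - apply (dd_L2 V v t x y Defs.B2 Defs.B1); auto.
  - apply (L1 Defs.B2).
  - apply (dd_L2 V v t x y Defs.B1 Defs.B2); auto.
  - apply (dd_L2 V v t x y Defs.B2 Defs.B2); auto.
Qed.

Lemma Fv_bound V u K t x y N M : open3 V -> sm V u -> V t x y ->
  (S (length K) <= N)%nat -> (S (numL K) <= M)%nat ->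
  Fv (applyZ K u) t x y <= 9 * (3 ^ S (length K) * normd N M u t x y).
Proof.
  intros HV Hu h h1 h2.
  set (Q := 3 ^ S (length K) * normd N M u t x y).
  assert (HB : forall a b, Rabs (pd a (boost b (applyZ K u)) t x y) <= Q).
  { intros a b. change (boost b (applyZ K u)) with (applyZ (ZL b :: K) u).
    apply (stepA_bound V u (ZL b :: K) a t x y N M); auto. }
  assert (HA : forall a, Rabs (pd a (applyZ K u) t x y) <= Q).
  { intros a. eapply Rle_trans. apply (stepA_bound V u K a t x y N M); auto; lia.
    unfold Q. apply Rmult_le_compat_r. apply normd_nonneg. simpl.
    pose proof (pow_lt 3 (length K)). lra. }
  unfold Fv, all_idx3, sumR; cbn [map fold_right].
  pose proof (HB D0 Defs.B1). pose proof (HB D0 Defs.B2).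
  pose proof (HB D1 Defs.B1). pose proof (HB D1 Defs.B2).
  pose proof (HB D2 Defs.B1). pose proof (HB D2 Defs.B2).
  pose proof (HA D0). pose proof (HA D1). pose proof (HA D2). lra.
Qed.


Lemma sm_LJ V J w : open3 V -> sm V w -> sm V (LJ J w).
Proof. intros HV H; induction J; simpl; auto. apply sm_boost; auto. Qed.
Lemma sm_pdI V I w : open3 V -> sm V w -> sm V (pdI I w).
Proof. intros HV H; induction I; simpl; auto. apply sm_pd; auto. Qed.

Definition SD (u : fn) (I : list idx3) (n : nat) : fn -> Prop := fun b =>
  exists g d J', (length J' < n)%nat /\ b = pd g (pd d (pdI I (LJ J' u))).

Lemma SD_sm V u I n : open3 V -> sm V u -> forall b, SD u I n b -> sm V b.
Proof. intros HV Hu b [g [d [J' [_ ->]]]]. apply sm_pd, sm_pd, sm_pdI, sm_LJ; auto. Qed.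

Fixpoint cwf (n : nat) : R := match n with O => 0 | S n => 5 * cwf n + 4 end.

Lemma cwf_nonneg n : 0 <= cwf n.
Proof. induction n; simpl; lra. Qed.
Lemma cwf_mono n m : (n <= m)%nat -> cwf n <= cwf m.
Proof.
  intros H; induction H; [lra|]. simpl. pose proof (cwf_nonneg m). lra.
Qed.

Lemma boost_dd_eq V b g d w : open3 V -> sm V w ->
  eqV V (boost b (pd g (pd d w)))
    (fplus (pd g (pd d (boost b w)))
      (fscal (-1) (fplus (fplus (fscal (dl d (idx_of b)) (pd g (pd D0 w))) (fscal (dl d D0) (pd g (pd (idx_of b) w))))
                         (fplus (fscal (dl g (idx_of b)) (pd D0 (pd d w))) (fscal (dl g D0) (pd (idx_of b) (pd d w))))))).
Proof.
  intros HV Hw t x y h.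
  assert (Sd : sm V (pd d w)) by (apply sm_pd; auto).
  assert (S1 : sm V (boost b (pd d w))) by (apply sm_boost; auto).
  assert (S2 : sm V (fscal (dl d (idx_of b)) (pd D0 w))) by (apply sm_scal; auto; apply sm_pd; auto).
  assert (S3 : sm V (fscal (dl d D0) (pd (idx_of b) w))) by (apply sm_scal; auto; apply sm_pd; auto).
  unfold fplus at 1. unfold fscal at 1.
  rewrite (eqV_pd V g _ _ HV (pd_boost_eq V d b w HV Hw) t x y h).
  rewrite (pd_plus_eq V g _ _ (sm_smooth0 _ _ S1) (sm_smooth0 _ _ (sm_plus _ _ _ HV S2 S3)) t x y h).
  unfold fplus at 1.
  rewrite (pd_plus_eq V g _ _ (sm_smooth0 _ _ S2) (sm_smooth0 _ _ S3) t x y h).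
  rewrite (pd_boost_eq V g b (pd d w) HV Sd t x y h).
  unfold fplus. rewrite !pd_scal_eq. unfold fscal. ring.
Qed.

Lemma boost_minus_eq V b f g : open3 V -> sm V f -> sm V g ->
  eqV V (boost b (fminus f g)) (fminus (boost b f) (boost b g)).
Proof.
  intros HV Hf Hg t x y h. unfold fminus at 1.
  rewrite (boost_plus_eq V b _ _ (sm_smooth0 _ _ Hf) (sm_smooth0 _ _ (sm_scal V (-1) _ HV Hg)) t x y h).
  unfold fminus, fplus. rewrite boost_scal_eq. reflexivity.
Qed.

Lemma pd_minus_eq V a f g : open3 V -> sm V f -> sm V g ->
  eqV V (pd a (fminus f g)) (fminus (pd a f) (pd a g)).
Proof.
  intros HV Hf Hg t x y h. unfold fminus at 1.
  rewrite (pd_plus_eq V a _ _ (sm_smooth0 _ _ Hf) (sm_smooth0 _ _ (sm_scal V (-1) _ HV Hg)) t x y h).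
  unfold fminus, fplus. rewrite pd_scal_eq. reflexivity.
Qed.

Lemma comb_lin4 V B A1 A2 A3 A4 c1 c2 c3 c4 :
  Rabs c1 <= 1 -> Rabs c2 <= 1 -> Rabs c3 <= 1 -> Rabs c4 <= 1 ->
  Comb V B 1 A1 -> Comb V B 1 A2 -> Comb V B 1 A3 -> Comb V B 1 A4 ->
  Comb V B 4 (fscal (-1) (fplus (fplus (fscal c1 A1) (fscal c2 A2)) (fplus (fscal c3 A3) (fscal c4 A4)))).
Proof.
  intros h1 h2 h3 h4 C1 C2 C3 C4.
  apply (cb_mono _ _ (Rabs (-1) * ((Rabs c1 * 1 + Rabs c2 * 1) + (Rabs c3 * 1 + Rabs c4 * 1)))).
  apply cb_scal. apply cb_plus; apply cb_plus; apply cb_scal; auto.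
  replace (Rabs (-1)) with 1 by (rewrite Rabs_left; lra). lra.
Qed.

Lemma comb_lin5 V B A0 A1 A2 A3 A4 c1 c2 c3 c4 :
  Rabs c1 <= 1 -> Rabs c2 <= 1 -> Rabs c3 <= 1 -> Rabs c4 <= 1 ->
  Comb V B 1 A0 -> Comb V B 1 A1 -> Comb V B 1 A2 -> Comb V B 1 A3 -> Comb V B 1 A4 ->
  Comb V B 5 (fplus A0 (fscal (-1) (fplus (fplus (fscal c1 A1) (fscal c2 A2)) (fplus (fscal c3 A3) (fscal c4 A4))))).
Proof.
  intros h1 h2 h3 h4 C0 C1 C2 C3 C4.
  replace 5 with (1 + 4) by lra. apply cb_plus; auto. apply comb_lin4; auto.
Qed.

Lemma SD_base V u I n g d J' : (length J' < n)%nat -> Comb V (SD u I n) 1 (pd g (pd d (pdI I (LJ J' u)))).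
Proof. intros h; apply cb_base. exists g, d, J'; auto. Qed.

Lemma stepC0 V u : open3 V -> sm V u -> forall J,
  Comb V (SD u [] (length J)) (cwf (length J)) (fminus (LJ J (dtt u)) (dtt (LJ J u))).
Proof.
  intros HV Hu J; induction J as [|b J IH].
  - simpl. apply (cb_ext _ _ _ (fconst 0)). apply cb_zero.
    intros t x y _; unfold fminus, fplus, fscal, fconst; ring.
  - cbn [LJ fold_right length cwf]. fold (LJ J (dtt u)). fold (LJ J u).
    set (X := LJ J (dtt u)). set (Y := LJ J u).
    assert (SX : sm V X) by (apply sm_LJ; auto; apply sm_pd, sm_pd; auto).
    assert (SY : sm V Y) by (apply sm_LJ; auto).
    assert (SdY : sm V (dtt Y)) by (apply sm_pd, sm_pd; auto).
    apply (cb_ext _ _ _ (fplus (boost b (fminus X (dtt Y))) (fminus (boost b (dtt Y)) (dtt (boost b Y))))).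
    2: { intros t x y h. unfold fplus at 1.
         rewrite (boost_minus_eq V b _ _ HV SX SdY t x y h).
         unfold fminus, fplus, fscal. ring. }
    apply (cb_mono _ _ (cwf (length J) * 5 + 4)); [|lra].
    apply cb_plus.
    + apply (comb_transport V (boost b) (SD u [] (length J))); auto.
      * apply linop_boost; auto.
      * apply SD_sm; auto.
      * intros b' [g [d [J' [hJ ->]]]]. simpl pdI.
        eapply cb_ext; [|exact (eqV_sym _ _ _ (boost_dd_eq V b g d (LJ J' u) HV (sm_LJ V J' u HV Hu)))].
        apply comb_lin5; try apply dl_abs.
        -- change (boost b (LJ J' u)) with (LJ (b :: J') u). apply (SD_base V u [] _ g d (b :: J')). simpl; lia.
        -- apply (SD_base V u [] _ g D0 J'). lia.
        -- apply (SD_base V u [] _ g (idx_of b) J'). lia.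
        -- apply (SD_base V u [] _ D0 d J'). lia.
        -- apply (SD_base V u [] _ (idx_of b) d J'). lia.
      * lra.
    + pose proof (boost_dd_eq V b D0 D0 Y HV SY) as E.
      apply (cb_ext _ _ _ (fscal (-1) (fplus (fplus (fscal (dl D0 (idx_of b)) (pd D0 (pd D0 Y))) (fscal (dl D0 D0) (pd D0 (pd (idx_of b) Y))))
                         (fplus (fscal (dl D0 (idx_of b)) (pd D0 (pd D0 Y))) (fscal (dl D0 D0) (pd (idx_of b) (pd D0 Y))))))).
      2: { intros t x y h. pose proof (E t x y h) as E'. unfold fplus, fscal in E'.
           unfold fminus, fplus, fscal, dtt. lra. }
      apply comb_lin4; try apply dl_abs.
      * apply (SD_base V u [] _ D0 D0 J). lia.
      * apply (SD_base V u [] _ D0 (idx_of b) J). lia.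
      * apply (SD_base V u [] _ D0 D0 J). lia.
      * apply (SD_base V u [] _ (idx_of b) D0 J). lia.
Qed.


Lemma pd3comm V a g d W : open3 V -> sm V W ->
  eqV V (pd a (pd g (pd d W))) (pd g (pd d (pd a W))).
Proof.
  intros HV HW t x y h.
  rewrite (schwarz V a g (pd d W) HV (sm_pd _ _ _ HW) t x y h).
  apply (eqV_pd V g _ _ HV (schwarz V a d W HV HW) t x y h).
Qed.

Lemma stepC V u : open3 V -> sm V u -> forall I J,
  Comb V (SD u I (length J)) (cwf (length J))
    (fminus (pdI I (LJ J (dtt u))) (dtt (pdI I (LJ J u)))).
Proof.
  intros HV Hu I J; induction I as [|a I IH].
  - exact (stepC0 V u HV Hu J).
  - cbn [pdI fold_right]. fold (pdI I (LJ J (dtt u))). fold (pdI I (LJ J u)).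
    set (A := pdI I (LJ J (dtt u))). set (Bf := pdI I (LJ J u)).
    assert (SA : sm V A) by (apply sm_pdI, sm_LJ; auto; apply sm_pd, sm_pd; auto).
    assert (SB : sm V Bf) by (apply sm_pdI, sm_LJ; auto).
    apply (cb_ext _ _ _ (pd a (fminus A (dtt Bf)))).
    2: { intros t x y h. unfold dtt. rewrite (pd_minus_eq V a _ _ HV SA (sm_pd _ _ _ (sm_pd _ _ _ SB)) t x y h).
         unfold fminus, fplus, fscal.
         rewrite (pd3comm V a D0 D0 Bf HV SB t x y h). reflexivity. }
    apply (cb_mono _ _ (cwf (length J) * 1)); [|lra].
    apply (comb_transport V (pd a) (SD u I (length J))); auto.
    + apply linop_pd; auto.
    + apply SD_sm; auto.
    + intros b' [g [d [J' [hJ ->]]]].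
      eapply cb_ext; [|exact (eqV_sym _ _ _ (pd3comm V a g d _ HV (sm_pdI V I _ HV (sm_LJ V J' u HV Hu))))].
      change (pd a (pdI I (LJ J' u))) with (pdI (a :: I) (LJ J' u)).
      apply SD_base; auto.
    + lra.
Qed.

Inductive Split : list zop -> list zop -> list zop -> Prop :=
| sp_nil : Split [] [] []
| sp_l : forall z K A B, Split K A B -> Split (z :: K) (z :: A) B
| sp_r : forall z K A B, Split K A B -> Split (z :: K) A (z :: B).

Lemma split_all K : Split K [] K.
Proof. induction K; constructor; auto. Qed.

Definition LS (f g : fn) (K : list zop) : fn -> Prop := fun b =>
  exists A B, Split K A B /\ A <> [] /\ b = fmult (applyZ A f) (applyZ B g).

Fixpoint lwf (n : nat) : R := match n with O => 0 | S n => 2 * lwf n + 1 end.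
Lemma lwf_nonneg n : 0 <= lwf n.
Proof. induction n; simpl; lra. Qed.

Lemma LS_sm V f g K : open3 V -> sm V f -> sm V g -> forall b, LS f g K b -> sm V b.
Proof. intros HV Hf Hg b [A [B [_ [_ ->]]]]. apply sm_mult; auto; apply sm_applyZ; auto. Qed.

Lemma stepD V f g : open3 V -> sm V f -> sm V g -> forall K,
  Comb V (LS f g K) (lwf (length K)) (fminus (applyZ K (fmult f g)) (fmult f (applyZ K g))).
Proof.
  intros HV Hf Hg K; induction K as [|z K IH].
  - simpl. apply (cb_ext _ _ _ (fconst 0)). apply cb_zero.
    intros t x y _; unfold fminus, fplus, fscal, fconst; ring.
  - cbn [applyZ fold_right length lwf]. fold (applyZ K (fmult f g)). fold (applyZ K g).
    set (X := applyZ K (fmult f g)). set (Y := applyZ K g).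
    assert (SX : sm V X) by (apply sm_applyZ; auto; apply sm_mult; auto).
    assert (SY : sm V Y) by (apply sm_applyZ; auto).
    destruct (linop_zop V z HV) as [L1 [L2 [L3 L4]]].
    apply (cb_ext _ _ _ (fplus (apply_zop z (fminus X (fmult f Y))) (fmult (apply_zop z f) Y))).
    2: { intros t x y h. unfold fminus at 1.
         assert (Sm : sm V (fmult f Y)) by (apply sm_mult; auto).
         pose proof (L2 _ _ SX (sm_scal V (-1) _ HV Sm) t x y h) as E1.
         pose proof (L3 (-1) _ Sm t x y h) as E2.
         pose proof (zop_mult_eq V z f Y HV Hf SY t x y h) as E3.
         unfold fplus at 1. rewrite E1. unfold fplus at 1. rewrite E2.
         unfold fminus, fplus, fscal. rewrite E3. unfold fplus, fmult. ring. }
    apply (cb_mono _ _ (lwf (length K) * 2 + 1)); [|lra].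
    apply cb_plus.
    + apply (comb_transport V (apply_zop z) (LS f g K)); auto.
      * apply linop_zop; auto.
      * apply LS_sm; auto.
      * intros b' [A [B [hs [hA ->]]]].
        eapply cb_ext; [|exact (eqV_sym _ _ _ (zop_mult_eq V z _ _ HV (sm_applyZ V A f HV Hf) (sm_applyZ V B g HV Hg)))].
        replace 2 with (1 + 1) by lra. apply cb_plus; apply cb_base.
        -- exists (z :: A), B. repeat split; auto. constructor; auto. discriminate.
        -- exists A, (z :: B). repeat split; auto. constructor; auto.
      * lra.
    + apply cb_base. exists [z], K. repeat split. constructor; apply split_all. discriminate.
Qed.


Lemma split_J J A B : Split (map ZL J) A B ->
  exists J1 J2, A = map ZL J2 /\ B = map ZL J1 /\ (length J1 + length J2 = length J)%nat.
Proof.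
  revert A B; induction J as [|b J IH]; intros A B H; simpl in H.
  - inversion H; subst. exists [], []; auto.
  - inversion H; subst.
    + destruct (IH _ _ H4) as [J1 [J2 [-> [-> hl]]]]. exists J1, (b :: J2); simpl; repeat split; auto; lia.
    + destruct (IH _ _ H4) as [J1 [J2 [-> [-> hl]]]]. exists (b :: J1), J2; simpl; repeat split; auto; lia.
Qed.

Lemma split_IJ I J A B : Split (map Zd I ++ map ZL J) A B ->
  exists I1 I2 J1 J2, A = map Zd I2 ++ map ZL J2 /\ B = map Zd I1 ++ map ZL J1 /\
    (length I1 + length I2 = length I)%nat /\ (length J1 + length J2 = length J)%nat.
Proof.
  revert A B; induction I as [|a I IH]; intros A B H; simpl in H.
  - destruct (split_J J A B H) as [J1 [J2 [-> [-> hl]]]]. exists [], [], J1, J2; simpl; auto.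
  - inversion H; subst.
    + destruct (IH _ _ H4) as [I1 [I2 [J1 [J2 [-> [-> [h1 h2]]]]]]].
      exists I1, (a :: I2), J1, J2; simpl; repeat split; auto; lia.
    + destruct (IH _ _ H4) as [I1 [I2 [J1 [J2 [-> [-> [h1 h2]]]]]]].
      exists (a :: I1), I2, J1, J2; simpl; repeat split; auto; lia.
Qed.

Lemma leb_true a b : (a <= b)%nat -> Nat.leb a b = true.
Proof. apply Nat.leb_le. Qed.

Lemma rhs1_nonneg I J Hb u t x y : 0 <= rhs1 I J Hb u t x y.
Proof.
  unfold rhs1. apply sumR_nonneg. intros b hb. apply in_map_iff in hb.
  destruct hb as [[[[I1 I2] J1] J2] [<- _]]. apply Rmult_le_pos; apply Rabs_pos.
Qed.

Lemma rhs1_ge I J Hb u t x y I1 I2 J1 J2 :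
  (length I1 + length I2 <= length I)%nat -> (length J1 + length J2 <= length J)%nat ->
  (1 <= length I2 + length J2)%nat ->
  Rabs (pdI I2 (LJ J2 Hb) t x y) * Rabs (dtt (pdI I1 (LJ J1 u)) t x y) <= rhs1 I J Hb u t x y.
Proof.
  intros h1 h2 h3. unfold rhs1. apply sumR_ge.
  - apply in_map_iff. exists (I1, I2, J1, J2). split; [reflexivity|].
    apply filter_In; split.
    + repeat apply in_prod; apply In_lists_upto; try lia; intros; first [apply all_idx3_in|apply all_idx2_in].
    + rewrite !leb_true by lia. reflexivity.
  - intros b hb. apply in_map_iff in hb.
    destruct hb as [[[[I1' I2'] J1'] J2'] [<- _]]. apply Rmult_le_pos; apply Rabs_pos.
Qed.

Lemma rhs2_nonneg I J u t x y : 0 <= rhs2 I J u t x y.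
Proof.
  unfold rhs2. apply sumR_nonneg. intros b hb. apply in_map_iff in hb.
  destruct hb as [J' [<- _]]. apply Rabs_pos.
Qed.

Lemma rhs2_ge I J u t x y J' : (length J' < length J)%nat ->
  Rabs (dtt (pdI I (LJ J' u)) t x y) <= rhs2 I J u t x y.
Proof.
  intros h. unfold rhs2. apply sumR_ge.
  - apply in_map_iff. exists J'. split; [reflexivity|]. apply filter_In; split.
    apply In_lists_upto; [lia|intros; apply all_idx2_in]. apply Nat.ltb_lt; auto.
  - intros b hb. apply in_map_iff in hb. destruct hb as [J'' [<- _]]. apply Rabs_pos.
Qed.

Lemma rhs3_elems p k Hb u t x y : forall b,
  In b (flat_map (fun p1 => flat_map (fun p2 => flat_map (fun k1 => map (fun k2 =>
      normpk p2 k2 Hb t x y * normd (p1 + 1) (k1 + 1) u t x y)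
      (filter (fun k2 => Nat.leb (k1 + k2) k) (seq 0 (S k))))
      (seq 0 (S k)))
      (filter (fun p2 => Nat.leb (p1 + p2) p) (seq 0 (S p))))
    (seq 0 p)) -> 0 <= b.
Proof.
  intros b hb. apply in_flat_map in hb as [p1 [_ hb]]. apply in_flat_map in hb as [p2 [_ hb]].
  apply in_flat_map in hb as [k1 [_ hb]]. apply in_map_iff in hb as [k2 [<- _]].
  apply Rmult_le_pos; [apply normpk_nonneg|apply normd_nonneg].
Qed.

Lemma rhs3_nonneg p k Hb u t x y : 0 <= rhs3 p k Hb u t x y.
Proof. unfold rhs3. apply sumR_nonneg. apply rhs3_elems. Qed.

Lemma rhs3_ge p k Hb u t x y p1 p2 k1 k2 : (p1 < p)%nat -> (p1 + p2 <= p)%nat -> (k1 + k2 <= k)%nat ->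
  normpk p2 k2 Hb t x y * normd (p1 + 1) (k1 + 1) u t x y <= rhs3 p k Hb u t x y.
Proof.
  intros h1 h2 h3. unfold rhs3. apply sumR_ge; [|apply rhs3_elems].
  apply in_flat_map; exists p1; split; [apply in_seq; lia|].
  apply in_flat_map; exists p2; split; [apply filter_In; split; [apply in_seq; lia|apply leb_true; lia]|].
  apply in_flat_map; exists k1; split; [apply in_seq; lia|].
  apply (in_map (fun k2 => normpk p2 k2 Hb t x y * normd (p1 + 1) (k1 + 1) u t x y)).
  apply filter_In; split; [apply in_seq; lia|apply leb_true; lia].
Qed.


Lemma pow3_mono n m : (n <= m)%nat -> 3 ^ n <= 3 ^ m.
Proof. intros h. apply Rle_pow; auto; lra. Qed.

Lemma second_bound V u I J t x y (p k : nat) : open3 V -> sm V u -> V t x y -> 0 < t ->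
  (forall b, Rabs (coord b t x y) <= t) ->
  p = (length I + length J)%nat -> k = length J ->
  forall b, SD u I k b ->
  Rabs (b t x y) <= rhs2 I J u t x y + 36 * 3 ^ p * / t * normd p k u t x y.
Proof.
  intros HV Hu h ht hc hp hk b [g [d [J' [hJ ->]]]].
  assert (Sv : sm V (pdI I (LJ J' u))) by (apply sm_pdI, sm_LJ; auto).
  pose proof (secbound V _ t x y g d HV Sv h ht hc) as S1.
  pose proof (rhs2_ge I J u t x y J' ltac:(lia)) as S2.
  rewrite <- applyZ_IJ in S1.
  pose proof (Fv_bound V u (map Zd I ++ map ZL J') t x y p k HV Hu h) as S3.
  rewrite length_IJ, numL_IJ in S3. specialize (S3 ltac:(lia) ltac:(lia)).
  pose proof (pow3_mono (S (length I + length J')) p ltac:(lia)) as S4.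
  pose proof (normd_nonneg p k u t x y) as S5.
  assert (it : 0 < / t) by (apply Rinv_0_lt_compat; lra).
  rewrite applyZ_IJ in S1, S3.
  assert (3 ^ S (length I + length J') * normd p k u t x y <= 3 ^ p * normd p k u t x y)
    by (apply Rmult_le_compat_r; auto).
  assert (Fv (pdI I (LJ J' u)) t x y * / t <= 9 * 3 ^ p * normd p k u t x y * / t).
  { apply Rmult_le_compat_r; lra. }
  unfold Rdiv in S1. lra.
Qed.

Lemma first_base_bound V u Hb I J t x y (p k : nat) : open3 V -> sm V u -> sm V Hb -> V t x y -> 0 < t ->
  (forall b, Rabs (coord b t x y) <= t) ->
  p = (length I + length J)%nat -> k = length J ->
  forall b, LS Hb (dtt u) (map Zd I ++ map ZL J) b ->
  Rabs (b t x y) <= rhs1 I J Hb u t x y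
     + cwf k * (rhs1 I J Hb u t x y + 36 * 3 ^ p * / t * rhs3 p k Hb u t x y).
Proof.
  intros HV Hu HH h ht hc hp hk b [A [B [hs [hA ->]]]].
  destruct (split_IJ I J A B hs) as [I1 [I2 [J1 [J2 [-> [-> [l1 l2]]]]]]].
  assert (hne : (1 <= length I2 + length J2)%nat).
  { destruct I2; destruct J2; simpl; try lia. exfalso; apply hA; reflexivity. }
  rewrite !applyZ_IJ. unfold fmult. rewrite Rabs_mult.
  set (hf := pdI I2 (LJ J2 Hb)).
  set (R1 := rhs1 I J Hb u t x y). set (R3 := rhs3 p k Hb u t x y).
  assert (it : 0 < / t) by (apply Rinv_0_lt_compat; lra).
  assert (HR1 : 0 <= R1) by apply rhs1_nonneg.
  assert (HR3 : 0 <= R3) by apply rhs3_nonneg.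
  assert (Hh : Rabs (hf t x y) <= normpk (length I2 + length J2) (length J2) Hb t x y).
  { unfold hf. rewrite <- applyZ_IJ. apply normpk_ge. rewrite length_IJ; lia. rewrite numL_IJ; lia. }
  set (sec1 := fminus (pdI I1 (LJ J1 (dtt u))) (dtt (pdI I1 (LJ J1 u)))).
  assert (E : pdI I1 (LJ J1 (dtt u)) t x y = dtt (pdI I1 (LJ J1 u)) t x y + sec1 t x y).
  { unfold sec1, fminus, fplus, fscal. ring. }
  rewrite E.
  assert (T1 : Rabs (hf t x y) * Rabs (dtt (pdI I1 (LJ J1 u)) t x y) <= R1).
  { apply rhs1_ge; lia. }
  set (M' := R1 + 36 * 3 ^ p * / t * R3).
  assert (HM' : 0 <= M').
  { unfold M'. assert (0 <= 3 ^ p) by (apply pow_le; lra).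
    assert (0 <= 36 * 3 ^ p * / t * R3) by (repeat apply Rmult_le_pos; lra). lra. }
  assert (T2 : Rabs (fmult hf sec1 t x y) <= cwf (length J1) * M').
  { apply (comb_bound V (fun bb => exists b, SD u I1 (length J1) b /\ bb = fmult hf b)); auto.
    - intros bb [b' [[g [d [J' [hJ ->]]]] ->]]. unfold fmult. rewrite Rabs_mult.
      assert (Sv : sm V (pdI I1 (LJ J' u))) by (apply sm_pdI, sm_LJ; auto).
      pose proof (secbound V _ t x y g d HV Sv h ht hc) as S1.
      assert (S2 : Rabs (hf t x y) * Rabs (dtt (pdI I1 (LJ J' u)) t x y) <= R1) by (apply rhs1_ge; lia).
      set (N := (length I1 + length J1 + 1)%nat). set (Mk := (length J1 + 1)%nat).
      pose proof (Fv_bound V u (map Zd I1 ++ map ZL J') t x y N Mk HV Hu h) as S3.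
      rewrite length_IJ, numL_IJ in S3. specialize (S3 ltac:(unfold N; lia) ltac:(unfold Mk; lia)).
      rewrite applyZ_IJ in S3.
      pose proof (pow3_mono (S (length I1 + length J')) p ltac:(lia)) as S4.
      pose proof (normd_nonneg N Mk u t x y) as S5.
      assert (S6 : normpk (length I2 + length J2) (length J2) Hb t x y * normd N Mk u t x y <= R3).
      { apply rhs3_ge; lia. }
      assert (S7 : Rabs (hf t x y) * normd N Mk u t x y <= R3).
      { eapply Rle_trans; [|apply S6]. apply Rmult_le_compat_r; auto. }
      set (a := Rabs (hf t x y)). assert (ha : 0 <= a) by apply Rabs_pos.
      set (F := Fv (pdI I1 (LJ J' u)) t x y). fold F in S1, S3.
      assert (S8 : a * F <= 9 * 3 ^ p * R3).
      { assert (a * F <= a * (9 * (3 ^ S (length I1 + length J') * normd N Mk u t x y))) by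
          (apply Rmult_le_compat_l; auto).
        assert (a * (3 ^ S (length I1 + length J') * normd N Mk u t x y) <= a * (3 ^ p * normd N Mk u t x y)).
        { apply Rmult_le_compat_l; auto. apply Rmult_le_compat_r; auto. }
        assert (3 ^ p * (a * normd N Mk u t x y) <= 3 ^ p * R3).
        { apply Rmult_le_compat_l; auto. apply pow_le; lra. }
        nra. }
      assert (S9 : a * (4 * F / t) <= 36 * 3 ^ p * / t * R3).
      { unfold Rdiv. replace (a * (4 * F * / t)) with (4 * / t * (a * F)) by ring.
        replace (36 * 3 ^ p * / t * R3) with (4 * / t * (9 * 3 ^ p * R3)) by ring.
        apply Rmult_le_compat_l; [lra|auto]. }
      assert (a * Rabs (pd g (pd d (pdI I1 (LJ J' u))) t x y) <= a * (Rabs (dtt (pdI I1 (LJ J' u)) t x y) + 4 * F / t))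
        by (apply Rmult_le_compat_l; auto).
      unfold M'. fold a in S2. lra.
    - apply comb_multl. apply stepC; auto. }
  assert (T3 : cwf (length J1) * M' <= cwf k * M').
  { apply Rmult_le_compat_r; auto. apply cwf_mono; lia. }
  unfold fmult in T2. rewrite Rabs_mult in T2.
  eapply Rle_trans. { apply Rmult_le_compat_l. apply Rabs_pos. apply Rabs_triang. }
  rewrite Rmult_plus_distr_l. fold M'. lra.
Qed.


Lemma main_bound V u Hb I J t x y : open3 V -> sm V u -> sm V Hb -> V t x y -> 0 < t ->
  (forall b, Rabs (coord b t x y) <= t) ->
  let p := (length I + length J)%nat in let k := length J in
  Rabs (comm I J Hb u t x y) <=
    lwf p * (rhs1 I J Hb u t x y + cwf k * (rhs1 I J Hb u t x y + 36 * 3 ^ p * / t * rhs3 p k Hb u t x y))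
    + Rabs (Hb t x y) * (cwf k * (rhs2 I J u t x y + 36 * 3 ^ p * / t * normd p k u t x y)).
Proof.
  intros HV Hu HH h ht hc p k.
  set (K := map Zd I ++ map ZL J).
  assert (E : comm I J Hb u t x y =
    fminus (applyZ K (fmult Hb (dtt u))) (fmult Hb (applyZ K (dtt u))) t x y
    + Hb t x y * fminus (applyZ K (dtt u)) (dtt (applyZ K u)) t x y).
  { unfold comm, K. rewrite !applyZ_IJ.
    change (fun t' x' y' => Hb t' x' y' * dtt u t' x' y') with (fmult Hb (dtt u)).
    unfold fminus, fplus, fscal. change (fmult Hb (pdI I (LJ J (dtt u))) t x y) with (Hb t x y * pdI I (LJ J (dtt u)) t x y). ring. }
  rewrite E.
  set (R1 := rhs1 I J Hb u t x y). set (R3 := rhs3 p k Hb u t x y).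
  set (R2 := rhs2 I J u t x y). set (ND := normd p k u t x y).
  assert (it : 0 < / t) by (apply Rinv_0_lt_compat; lra).
  assert (0 <= 3 ^ p) by (apply pow_le; lra).
  assert (HR1 : 0 <= R1) by apply rhs1_nonneg.
  assert (HR2 : 0 <= R2) by apply rhs2_nonneg.
  assert (HR3 : 0 <= R3) by apply rhs3_nonneg.
  assert (HND : 0 <= ND) by apply normd_nonneg.
  pose proof (cwf_nonneg k).
  assert (B1 : Rabs (fminus (applyZ K (fmult Hb (dtt u))) (fmult Hb (applyZ K (dtt u))) t x y)
     <= lwf p * (R1 + cwf k * (R1 + 36 * 3 ^ p * / t * R3))).
  { apply (comb_bound V (LS Hb (dtt u) K)); auto.
    - assert (0 <= 36 * 3 ^ p * / t * R3) by (repeat apply Rmult_le_pos; lra).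
      assert (0 <= cwf k * (R1 + 36 * 3 ^ p * / t * R3)) by (apply Rmult_le_pos; lra). lra.
    - apply (first_base_bound V u Hb I J t x y p k); auto.
    - replace p with (length K) by (unfold K; rewrite length_IJ; auto).
      apply stepD; auto. apply sm_pd, sm_pd; auto. }
  assert (B2 : Rabs (fminus (applyZ K (dtt u)) (dtt (applyZ K u)) t x y)
     <= cwf k * (R2 + 36 * 3 ^ p * / t * ND)).
  { apply (comb_bound V (SD u I k)); auto.
    - assert (0 <= 36 * 3 ^ p * / t * ND) by (repeat apply Rmult_le_pos; lra). lra.
    - apply (second_bound V u I J t x y p k); auto.
    - unfold K. rewrite !applyZ_IJ. apply stepC; auto. }
  eapply Rle_trans; [apply Rabs_triang|]. rewrite Rabs_mult.
  assert (Rabs (Hb t x y) * Rabs (fminus (applyZ K (dtt u)) (dtt (applyZ K u)) t x y)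
    <= Rabs (Hb t x y) * (cwf k * (R2 + 36 * 3 ^ p * / t * ND))).
  { apply Rmult_le_compat_l; auto; apply Rabs_pos. }
  lra.
Qed.


Lemma sm_Hbar V H : open3 V -> (forall t x y, V t x y -> 0 < t) ->
  (forall a b, sm V (H a b)) -> sm V (Hbar00 H).
Proof.
  intros HV Ht HH.
  set (c1 := coord Defs.B1). set (c2 := coord Defs.B2).
  set (e := fplus (fplus (H D0 D0) (fscal (-2)
      (fplus (fmult (fmult c1 finv) (H D1 D0)) (fmult (fmult c2 finv) (H D2 D0)))))
      (fplus (fplus (fmult (fmult (fmult c1 c1) (fmult finv finv)) (H D1 D1))
                    (fmult (fmult (fmult c1 c2) (fmult finv finv)) (H D1 D2)))
             (fplus (fmult (fmult (fmult c2 c1) (fmult finv finv)) (H D2 D1))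
                    (fmult (fmult (fmult c2 c2) (fmult finv finv)) (H D2 D2))))).
  apply (sm_ext V e).
  - auto.
  - intros t x y h. pose proof (Ht t x y h). unfold e, Hbar00, c1, c2, fplus, fscal, fmult, finv.
    cbn [sumR map flat_map all_idx2 fold_right app coord idx_of]. field. lra.
  - assert (S1 : sm V c1) by (apply sm_coord; auto).
    assert (S2 : sm V c2) by (apply sm_coord; auto).
    assert (Si : sm V finv) by (apply sm_inv; auto).
    unfold e. repeat first [apply sm_plus | apply sm_scal | apply sm_mult]; auto.
Qed.

Lemma abs_le_rad x y : Rabs x <= rad x y /\ Rabs y <= rad x y.
Proof.
  unfold rad. split.
  - rewrite <- (sqrt_pow2 (Rabs x)) by apply Rabs_pos. apply sqrt_le_1_alt.
    pose proof (pow2_ge_0 y). rewrite pow2_abs. lra.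
  - rewrite <- (sqrt_pow2 (Rabs y)) by apply Rabs_pos. apply sqrt_le_1_alt.
    pose proof (pow2_ge_0 x). rewrite pow2_abs. lra.
Qed.

Theorem lemma5p9 :
  forall (I : list idx3) (J : list idx2),
  exists C : R,
  forall (s0 s1 : R) (U : R -> R -> R -> Prop) (u : fn) (H : idx3 -> idx3 -> fn),
    open3 U ->
    (forall t x y, inK s0 s1 t x y -> U t x y) ->
    smooth_on U u ->
    (forall a b, smooth_on U (H a b)) ->
    (forall a b t x y, U t x y -> H a b t x y = H b a t x y) ->
    forall t x y, inK s0 s1 t x y ->
      let Hb := Hbar00 H in
      let p := (length I + length J)%nat in
      let k := length J in
      Rabs (comm I J Hb u t x y)
      <= C * rhs1 I J Hb u t x y
         + C * Rabs (Hb t x y) * rhs2 I J u t x y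
         + C * / t * rhs3 p k Hb u t x y
         + C * / t * Rabs (Hb t x y) * normd p k u t x y.
Proof.
  intros I J.
  set (p0 := (length I + length J)%nat). set (k0 := length J).
  exists ((lwf p0 + 1) * (1 + cwf k0) * (36 * 3 ^ p0)).
  intros s0 s1 U u H HUo HKU Hu HH _ t x y hK Hb p k.
  set (V := fun t x y => U t x y /\ 0 < t).
  assert (HV : open3 V).
  { intros t' x' y' [hu ht']. destruct (HUo t' x' y' hu) as [eps [he Hn]].
    exists (Rmin eps (t' / 2)); split; [apply Rmin_glb_lt; lra|].
    intros a b c ha hb hc. pose proof (Rmin_l eps (t'/2)). pose proof (Rmin_r eps (t'/2)).
    split. apply Hn; lra. apply Rabs_def2 in ha. lra. }
  assert (HVt : forall t x y, V t x y -> 0 < t) by (intros ? ? ? [_ h]; exact h).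
  assert (HsU : forall t x y, V t x y -> U t x y) by (intros ? ? ? [h _]; exact h).
  assert (Su : sm V u) by (apply (smooth_on_sm U); auto).
  assert (SH : sm V Hb) by (apply sm_Hbar; auto; intros a b; apply (smooth_on_sm U); auto).
  destruct hK as [hr hK'].
  pose proof (abs_le_rad x y) as [rx ry].
  pose proof (sqrt_pos (x ^ 2 + y ^ 2)) as rpos. fold (rad x y) in rpos.
  assert (ht : 0 < t) by lra.
  assert (hP : V t x y) by (split; [apply HKU; split; auto|auto]).
  assert (hc : forall b, Rabs (coord b t x y) <= t) by (intros b; destruct b; simpl; lra).
  pose proof (main_bound V u Hb I J t x y HV Su SH hP ht hc) as M. cbv zeta in M.
  fold p0 k0 in M. unfold p, k. fold p0 k0.
  set (R1 := rhs1 I J Hb u t x y) in *. set (R3 := rhs3 p0 k0 Hb u t x y) in *.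
  set (R2 := rhs2 I J u t x y) in *. set (ND := normd p0 k0 u t x y) in *.
  set (hb := Rabs (Hb t x y)) in *.
  set (a := lwf p0) in *. set (c := cwf k0) in *. set (Z := 36 * 3 ^ p0) in *.
  set (it := / t) in *.
  assert (it0 : 0 < it) by (apply Rinv_0_lt_compat; lra).
  assert (HR1 : 0 <= R1) by apply rhs1_nonneg.
  assert (HR2 : 0 <= R2) by apply rhs2_nonneg.
  assert (HR3 : 0 <= R3) by apply rhs3_nonneg.
  assert (HND : 0 <= ND) by apply normd_nonneg.
  assert (hb0 : 0 <= hb) by apply Rabs_pos.
  assert (ha : 0 <= a) by apply lwf_nonneg.
  assert (hcc : 0 <= c) by apply cwf_nonneg.
  assert (hZ : 36 <= Z).
  { unfold Z. assert (1 <= 3 ^ p0) by (apply pow_R1_Rle; lra). lra. }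
  assert (W1 : a * (1 + c) <= (a + 1) * (1 + c)) by nra.
  assert (W2 : a * c <= (a + 1) * (1 + c)) by nra.
  assert (W3 : c <= (a + 1) * (1 + c)) by nra.
  assert (W0 : 1 <= (a + 1) * (1 + c)) by nra.
  assert (W4 : (a + 1) * (1 + c) <= (a + 1) * (1 + c) * Z) by nra.
  assert (W5 : a * c * Z <= (a + 1) * (1 + c) * Z) by (apply Rmult_le_compat_r; lra).
  assert (W6 : c * Z <= (a + 1) * (1 + c) * Z) by (apply Rmult_le_compat_r; lra).
  assert (Q1 : a * (1 + c) * R1 <= (a + 1) * (1 + c) * Z * R1).
  { apply Rmult_le_compat_r; auto. lra. }
  assert (Q2 : a * c * Z * (it * R3) <= (a + 1) * (1 + c) * Z * (it * R3)).
  { apply Rmult_le_compat_r. apply Rmult_le_pos; lra. lra. }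
  assert (Q3 : c * (hb * R2) <= (a + 1) * (1 + c) * Z * (hb * R2)).
  { apply Rmult_le_compat_r. apply Rmult_le_pos; lra. lra. }
  assert (Q4 : c * Z * (it * hb * ND) <= (a + 1) * (1 + c) * Z * (it * hb * ND)).
  { apply Rmult_le_compat_r. repeat apply Rmult_le_pos; lra. lra. }
  assert (EQ : a * (R1 + c * (R1 + Z * it * R3)) + hb * (c * (R2 + Z * it * ND)) =
     a * (1 + c) * R1 + a * c * Z * (it * R3) + c * (hb * R2) + c * Z * (it * hb * ND)) by ring.
  assert (EQ2 : (a + 1) * (1 + c) * Z * R1 + (a + 1) * (1 + c) * Z * hb * R2 +
     (a + 1) * (1 + c) * Z * it * R3 + (a + 1) * (1 + c) * Z * it * hb * ND =
     (a + 1) * (1 + c) * Z * R1 + (a + 1) * (1 + c) * Z * (hb * R2) +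
     (a + 1) * (1 + c) * Z * (it * R3) + (a + 1) * (1 + c) * Z * (it * hb * ND)) by ring.
  lra.
Qed.
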